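(* Let $q\ge1$. Identify $\operatorname{Diff}(S^1)/S^1$ with $\{\varphi\in\operatorname{Diff}(S^1):\varphi(0)=0\}$ and equip it with the right-invariant homogeneous $\dot W^{1,q}$ Finsler metric $F_\varphi(h)=\big(\int_0^1|(h\circ\varphi^{-1})'(\theta)|^q\,d\theta\big)^{1/q}$; equip $C^\infty(S^1,\mathbb{R})$ with the flat $L^q$ metric $|\delta f|_f=\|\delta f\|_{L^q(0,1)}$. Let $\Phi:\operatorname{Diff}(S^1)/S^1\to C^\infty(S^1,\mathbb{R})$, $\Phi(\varphi)=q(\varphi')^{1/q}$. Then: (1) $\Phi$ is an isometric embedding, i.e. $\|d\Phi(\varphi).h\|_{L^q}=F_\varphi(h)$ for all $\varphi$ and tangent vectors $h$; (2) the image of $\Phi$ is the set $\mathcal{U}_q=\{f\in C^\infty(S^1;\mathbb{R}): f>0,\ \|f\|_{L^q}=q\}$; (3) the diameter of $\mathcal{U}_q$ with respect to its intrinsic distance (infimum of $L^q$-lengths $\int_0^1\|\partial_tf_t\|_{L^q}dt$ of paths $f_t$ lying in $\mathcal{U}_q$) satisfies $q<\operatorname{diam}\mathcal{U}_q\le 8q$.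
   Context: $S^1$ is identified with $[0,1]$ with endpoints identified; $\operatorname{Diff}(S^1)$ denotes the identity component of the group of smooth diffeomorphisms of $S^1$. *)

(* Defs.v *)
From Stdlib Require Import Reals ClassicalEpsilon.
Open Scope R_scope.

(* the derivative of f at x (chosen by epsilon; the genuine derivative
   whenever f is differentiable at x, since derivatives are unique) *)
Definition deriv (f : R -> R) (x : R) : R :=
  epsilon (inhabits 0) (fun l => derivable_pt_lim f x l).

Definition inv (f : R -> R) (y : R) : R :=
  epsilon (inhabits 0) (fun x => f x = y).

(* Riemann integral over [0,1] (the genuine one whenever f is
   Riemann integrable; RiemannInt does not depend on the proof) *)
Definition integral01 (f : R -> R) : R :=
  epsilon (inhabits 0)
    (fun r => exists pr : Riemann_integrable f 0 1, RiemannInt pr = r).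

(* real power x^y for x > 0, and 0 for x <= 0 (so that 0^y = 0 for y > 0;
   note Stdlib's Rpower 0 y = 1) *)
Definition rpow (x y : R) : R :=
  if Rlt_dec 0 x then Rpower x y else 0.

Definition Lqnorm (q : R) (f : R -> R) : R :=
  rpow (integral01 (fun x => rpow (Rabs (f x)) q)) (/ q).

Definition smooth (f : R -> R) : Prop :=
  exists g : nat -> R -> R,
    g O = f /\ forall n x, derivable_pt_lim (g n) x (g (S n) x).

Definition cont2 (G : R -> R -> R) : Prop :=
  forall t x eps, 0 < eps -> exists delta, 0 < delta /\
    forall s y, Rabs (s - t) < delta -> Rabs (y - x) < delta ->
      Rabs (G s y - G t x) < eps.

Definition smooth2 (F : R -> R -> R) : Prop :=
  exists G : nat -> nat -> R -> R -> R,
    G O O = F /\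
    (forall i j t x, derivable_pt_lim (fun s => G i j s x) t (G (S i) j t x)) /\
    (forall i j t x, derivable_pt_lim (fun y => G i j t y) x (G i (S j) t x)) /\
    (forall i j, cont2 (G i j)).

Definition is_lower_bound (E : R -> Prop) (m : R) : Prop :=
  forall x, E x -> m <= x.
Definition is_glb (E : R -> Prop) (m : R) : Prop :=
  is_lower_bound E m /\ forall b, is_lower_bound E b -> b <= m.

(* S^1 = [0,1] with endpoints identified = R/Z: functions on S^1 are
   1-periodic functions on R. *)
Definition Cinf_S1 (f : R -> R) : Prop :=
  smooth f /\ forall x, f (x + 1) = f x.

(* Diff(S^1)/S^1 = { phi in Diff_0(S^1) : phi(0) = 0 }, elements represented
   by their (unique) lift phi : R -> R with phi(x+1) = phi(x)+1, phi' > 0,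
   phi(0) = 0. *)
Definition DiffS1_0 (phi : R -> R) : Prop :=
  smooth phi /\ (forall x, phi (x + 1) = phi x + 1) /\
  (forall x, 0 < deriv phi x) /\ phi 0 = 0.

Definition tangent (h : R -> R) : Prop := Cinf_S1 h /\ h 0 = 0.

Definition Fmetric (q : R) (phi h : R -> R) : R :=
  Lqnorm q (deriv (fun th => h (inv phi th))).

Definition Phi (q : R) (phi : R -> R) : R -> R :=
  fun x => q * rpow (deriv phi x) (/ q).

Definition dPhi (q : R) (phi h : R -> R) : R -> R :=
  fun x => deriv (fun e => Phi q (fun y => phi y + e * h y) x) 0.

Definition Uq (q : R) (f : R -> R) : Prop :=
  Cinf_S1 f /\ (forall x, 0 < f x) /\ Lqnorm q f = q.

Definition Uq_path (q : R) (f g : R -> R) (F : R -> R -> R) : Prop :=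
  smooth2 F /\ (forall t, 0 <= t <= 1 -> Uq q (F t)) /\
  (forall x, F 0 x = f x) /\ (forall x, F 1 x = g x).

Definition path_length (q : R) (F : R -> R -> R) : R :=
  integral01 (fun t => Lqnorm q (fun x => deriv (fun s => F s x) t)).

Definition path_lengths (q : R) (f g : R -> R) (l : R) : Prop :=
  exists F, Uq_path q f g F /\ path_length q F = l.

Definition intrinsic_dist (q : R) (f g : R -> R) (d : R) : Prop :=
  is_glb (path_lengths q f g) d.

Definition is_diam_Uq (q : R) (D : R) : Prop :=
  (forall f g, Uq q f -> Uq q g -> exists d, intrinsic_dist q f g d) /\
  is_lub (fun d => exists f g, Uq q f /\ Uq q g /\ intrinsic_dist q f g d) D.

(* Main.v *)
From Pilot Require Import Defs.
From Stdlib Require Import Reals.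
From Coquelicot Require Import Coquelicot.
From Stdlib Require Import Reals Lra FunctionalExtensionality ClassicalEpsilon.
Import Pilot.Defs.
Open Scope R_scope.

Lemma deriv_eq f x l : derivable_pt_lim f x l -> deriv f x = l.
Proof.
  intro H. unfold deriv.
  pose proof (epsilon_spec (inhabits 0) (fun l => derivable_pt_lim f x l) (ex_intro _ l H)) as H1.
  apply (uniqueness_limite f x); auto.
Qed.

Lemma dpl_plus f g x a b : derivable_pt_lim f x a -> derivable_pt_lim g x b ->
  derivable_pt_lim (fun y => f y + g y) x (a + b).
Proof. intros; apply (derivable_pt_lim_plus f g); auto. Qed.
Lemma dpl_mult f g x a b : derivable_pt_lim f x a -> derivable_pt_lim g x b ->
  derivable_pt_lim (fun y => f y * g y) x (a * g x + f x * b).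
Proof. intros; apply (derivable_pt_lim_mult f g); auto. Qed.
Lemma dpl_comp f g x a b : derivable_pt_lim g x a -> derivable_pt_lim f (g x) b ->
  derivable_pt_lim (fun y => f (g y)) x (b * a).
Proof. intros; apply (derivable_pt_lim_comp g f); auto. Qed.
Lemma dpl_const c x : derivable_pt_lim (fun _ => c) x 0.
Proof. apply derivable_pt_lim_const. Qed.
Lemma dpl_id x : derivable_pt_lim (fun y => y) x 1.
Proof. apply derivable_pt_lim_id. Qed.
Lemma dpl_ext f g x l : (forall y, f y = g y) -> derivable_pt_lim f x l -> derivable_pt_lim g x l.
Proof. intros H. replace g with f; auto. apply functional_extensionality; auto. Qed.

Fixpoint Dn (n : nat) (f : R -> R) : Prop :=
  match n with O => True
  | S m => exists f', (forall x, derivable_pt_lim f x (f' x)) /\ Dn m f' end.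

Fixpoint DPn (n : nat) (f : R -> R) : Prop :=
  match n with O => True
  | S m => exists f', (forall x, 0 < x -> derivable_pt_lim f x (f' x)) /\ DPn m f' end.

Lemma Dn_S n : forall f, Dn (S n) f -> Dn n f.
Proof.
  induction n; simpl; auto. intros f [f' [H1 H2]]. exists f'; split; auto.
Qed.
Lemma DPn_S n : forall f, DPn (S n) f -> DPn n f.
Proof.
  induction n; simpl; auto. intros f [f' [H1 H2]]. exists f'; split; auto.
Qed.

Lemma smooth_Dn f : smooth f <-> forall n, Dn n f.
Proof.
  split.
  - intros [g [H0 H]] n. subst f. generalize 0%nat as k. induction n; simpl; auto.
    intro k. exists (g (S k)). split; auto.
  - intros H. exists (fun n => Nat.iter n deriv f). split; [reflexivity|].
    assert (K: forall n, forall m, Dn m (Nat.iter n deriv f)).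
    { induction n; simpl; auto. intro m.
      destruct (IHn (S m)) as [f' [Hd Hm]].
      replace (deriv (Nat.iter n deriv f)) with f'; auto.
      apply functional_extensionality; intro x. symmetry; apply deriv_eq; auto. }
    intros n x. destruct (K n 1%nat) as [f' [Hd _]]. simpl.
    rewrite (deriv_eq _ _ _ (Hd x)). auto.
Qed.

Lemma Dn_const c n : Dn n (fun _ => c).
Proof. revert c; induction n; simpl; auto. intro c. exists (fun _ => 0). split; auto. intro; apply dpl_const. Qed.
Lemma Dn_id n : Dn n (fun x => x).
Proof. destruct n; simpl; auto. exists (fun _ => 1). split; [intro; apply dpl_id| apply Dn_const]. Qed.

Lemma Dn_plus n : forall f g, Dn n f -> Dn n g -> Dn n (fun x => f x + g x).
Proof.
  induction n; simpl; auto. intros f g [f' [Hf Hf']] [g' [Hg Hg']].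
  exists (fun x => f' x + g' x). split; auto. intro; apply dpl_plus; auto.
Qed.

Lemma Dn_mult n : forall f g, Dn n f -> Dn n g -> Dn n (fun x => f x * g x).
Proof.
  induction n; simpl; auto. intros f g Df Dg.
  destruct Df as [f' [Hf Hf']], Dg as [g' [Hg Hg']].
  exists (fun x => f' x * g x + f x * g' x). split.
  - intro; apply dpl_mult; auto.
  - apply Dn_plus; apply IHn; auto; apply Dn_S; simpl; eauto.
Qed.

Lemma Dn_comp n : forall f g, Dn n f -> Dn n g -> Dn n (fun x => f (g x)).
Proof.
  induction n; simpl; auto. intros f g Df Dg.
  destruct Df as [f' [Hf Hf']], Dg as [g' [Hg Hg']].
  exists (fun x => f' (g x) * g' x). split.
  - intro; apply dpl_comp; auto.
  - apply Dn_mult; auto. apply IHn; auto. apply Dn_S; simpl; eauto.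
Qed.

Lemma Dn_comp_pos n : forall f g, DPn n f -> Dn n g -> (forall x, 0 < g x) -> Dn n (fun x => f (g x)).
Proof.
  induction n; simpl; auto. intros f g Df Dg Hpos.
  destruct Df as [f' [Hf Hf']], Dg as [g' [Hg Hg']].
  exists (fun x => f' (g x) * g' x). split.
  - intro; apply dpl_comp; auto.
  - apply Dn_mult; auto. apply IHn; auto. apply Dn_S; simpl; eauto.
Qed.

Lemma DPn_Rpower n : forall c k, DPn n (fun x => k * Rpower x c).
Proof.
  induction n; simpl; auto. intros c k.
  exists (fun x => (k * c) * Rpower x (c - 1)). split; auto.
  intros x Hx. 
  replace (k * c * Rpower x (c - 1)) with (0 * Rpower x c + k * (c * Rpower x (c-1))) by ring.
  apply (dpl_mult (fun _ => k) (fun y => Rpower y c)). apply dpl_const. apply derivable_pt_lim_power; auto.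
Qed.

Lemma Dn_scal n c f : Dn n f -> Dn n (fun x => c * f x).
Proof. intro; apply Dn_mult; auto; apply Dn_const. Qed.
Lemma Dn_opp n f : Dn n f -> Dn n (fun x => - f x).
Proof. intro H. replace (fun x => - f x) with (fun x => (-1) * f x). apply Dn_scal; auto.
  apply functional_extensionality; intro; ring. Qed.
Lemma Dn_minus n f g : Dn n f -> Dn n g -> Dn n (fun x => f x - g x).
Proof. intros. apply Dn_plus; auto. apply Dn_opp; auto. Qed.

Lemma Dn_sincos n : Dn n sin /\ Dn n cos.
Proof.
  induction n; simpl; auto. destruct IHn as [Hs Hc]. split.
  - exists cos. split; auto. intro; apply derivable_pt_lim_sin.
  - exists (fun x => - sin x). split. intro; apply derivable_pt_lim_cos. apply Dn_opp; auto.
Qed.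

Lemma Dn_ext n f g : (forall x, f x = g x) -> Dn n f -> Dn n g.
Proof. intros H. replace g with f; auto. apply functional_extensionality; auto. Qed.

Lemma sm_const c : smooth (fun _ => c).
Proof. apply smooth_Dn; intro; apply Dn_const. Qed.
Lemma sm_id : smooth (fun x => x).
Proof. apply smooth_Dn; intro; apply Dn_id. Qed.
Lemma sm_plus f g : smooth f -> smooth g -> smooth (fun x => f x + g x).
Proof. rewrite !smooth_Dn; intros; apply Dn_plus; auto. Qed.
Lemma sm_minus f g : smooth f -> smooth g -> smooth (fun x => f x - g x).
Proof. rewrite !smooth_Dn; intros; apply Dn_minus; auto. Qed.
Lemma sm_mult f g : smooth f -> smooth g -> smooth (fun x => f x * g x).
Proof. rewrite !smooth_Dn; intros; apply Dn_mult; auto. Qed.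
Lemma sm_scal c f : smooth f -> smooth (fun x => c * f x).
Proof. rewrite !smooth_Dn; intros; apply Dn_scal; auto. Qed.
Lemma sm_comp f g : smooth f -> smooth g -> smooth (fun x => f (g x)).
Proof. rewrite !smooth_Dn; intros; apply Dn_comp; auto. Qed.
Lemma sm_sin : smooth sin.
Proof. apply smooth_Dn; intro; apply Dn_sincos. Qed.
Lemma sm_cos : smooth cos.
Proof. apply smooth_Dn; intro; apply Dn_sincos. Qed.
Lemma sm_Rpower c g : smooth g -> (forall x, 0 < g x) -> smooth (fun x => Rpower (g x) c).
Proof.
  rewrite !smooth_Dn; intros Hg Hp n.
  apply Dn_ext with (fun x => (fun y => 1 * Rpower y c) (g x)). intro; simpl; ring.
  apply (Dn_comp_pos n (fun y => 1 * Rpower y c) g); auto. apply DPn_Rpower.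
Qed.
Lemma sm_ext f g : (forall x, f x = g x) -> smooth f -> smooth g.
Proof. intros H. replace g with f; auto. apply functional_extensionality; auto. Qed.

Lemma sm_derivable f : smooth f -> forall x, derivable_pt_lim f x (deriv f x).
Proof.
  intros [g [H0 H]] x. subst f. rewrite (deriv_eq _ _ _ (H 0%nat x)). auto.
Qed.
Lemma sm_deriv f : smooth f -> smooth (deriv f).
Proof.
  intros [g [H0 H]]. exists (fun n => g (S n)). split; auto.
  apply functional_extensionality; intro x. subst f. symmetry; apply deriv_eq; auto.
Qed.
Lemma sm_cont f : smooth f -> forall x, continuity_pt f x.
Proof. intros H x. apply derivable_continuous_pt. exists (deriv f x). apply sm_derivable; auto. Qed.

Lemma int01_RInt f : ex_RInt f 0 1 -> integral01 f = RInt f 0 1.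
Proof.
  intro H. unfold integral01.
  pose proof (ex_RInt_Reals_0 _ _ _ H) as pr.
  pose proof (epsilon_spec (inhabits 0) (fun r => exists pr : Riemann_integrable f 0 1, RiemannInt pr = r)
     (ex_intro _ (RiemannInt pr) (ex_intro _ pr eq_refl))) as [pr' E].
  rewrite <- E. symmetry. apply RInt_Reals.
Qed.

Lemma cont_continuous f x : continuity_pt f x -> continuous f x.
Proof. intro H. apply continuity_pt_filterlim; auto. Qed.
Lemma continuous_cont f x : continuous f x -> continuity_pt f x.
Proof. intro H. apply continuity_pt_filterlim; auto. Qed.

Lemma cont_exRInt f a b : a <= b -> (forall x, a <= x <= b -> continuity_pt f x) -> ex_RInt f a b.
Proof.
  intros Hab H. apply (@ex_RInt_continuous R_CompleteNormedModule). intros z Hz. apply cont_continuous, H.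
  rewrite Rmin_left, Rmax_right in Hz; auto.
Qed.

Lemma rpow_pos x y : 0 < x -> rpow x y = Rpower x y.
Proof. intro H; unfold rpow; destruct (Rlt_dec 0 x); [auto| lra]. Qed.
Lemma rpow_le0 x y : x <= 0 -> rpow x y = 0.
Proof. intro H; unfold rpow; destruct (Rlt_dec 0 x); [lra| auto]. Qed.
Lemma Rpower_pos x y : 0 < Rpower x y.
Proof. unfold Rpower; apply exp_pos. Qed.
Lemma rpow_ge0 x y : 0 <= rpow x y.
Proof. unfold rpow; destruct (Rlt_dec 0 x); [left; apply Rpower_pos| lra]. Qed.
Lemma rpow_gt0 x y : 0 < x -> 0 < rpow x y.
Proof. intro; rewrite rpow_pos; auto; apply Rpower_pos. Qed.

Lemma Rpower_inv x c : 0 < x -> c <> 0 -> Rpower (Rpower x c) (/ c) = x.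
Proof. intros. rewrite Rpower_mult. rewrite Rinv_r; auto. apply Rpower_1; auto. Qed.

Lemma rpow_inv x c : 0 < x -> c <> 0 -> rpow (rpow x c) (/ c) = x.
Proof. intros. rewrite (rpow_pos x), rpow_pos; [apply Rpower_inv; auto| apply Rpower_pos|auto]. Qed.

Lemma Rpower_le_l a b c : 0 <= c -> 0 < a <= b -> Rpower a c <= Rpower b c.
Proof. intros; apply Rle_Rpower_l; auto. Qed.

Lemma rpow_mono x y c : 0 < c -> x <= y -> rpow x c <= rpow y c.
Proof.
  intros Hc Hxy. destruct (Rlt_dec 0 x).
  - rewrite !rpow_pos by lra. apply Rle_Rpower_l; lra.
  - rewrite (rpow_le0 x) by lra. apply rpow_ge0.
Qed.
Lemma rpow_lt x y c : 0 < c -> 0 <= x -> x < y -> rpow x c < rpow y c.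
Proof.
  intros Hc Hx Hxy. destruct (Rlt_dec 0 x).
  - rewrite !rpow_pos by lra. apply Rlt_Rpower_l; lra.
  - rewrite (rpow_le0 x) by lra. apply rpow_gt0; lra.
Qed.

Lemma Rpower_0base_small eps c : 0 < c -> 0 < eps -> forall y, 0 < y < Rpower eps (/ c) -> Rpower y c < eps.
Proof.
  intros Hc He y Hy. replace eps with (Rpower (Rpower eps (/c)) c).
  apply Rlt_Rpower_l; lra. rewrite Rpower_mult, Rinv_l by lra. apply Rpower_1; auto.
Qed.

Lemma rpow_cont c y : 0 < c -> continuity_pt (fun z => rpow z c) y.
Proof.
  intros Hc. destruct (Rtotal_order y 0) as [Hy|[Hy|Hy]].
  - apply continuity_pt_locally. intros eps. exists (mkposreal (-y) ltac:(lra)).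
    intros u Hu. unfold ball in Hu; simpl in Hu; unfold AbsRing_ball, abs, minus, plus, opp in Hu; simpl in Hu.
    rewrite !rpow_le0. rewrite Rminus_0_r, Rabs_R0; apply cond_pos. lra.
    apply Rabs_def2 in Hu. lra.
  - subst y. apply continuity_pt_locally. intros eps.
    exists (mkposreal (Rpower eps (/ c)) (Rpower_pos _ _)).
    intros u Hu. unfold ball in Hu; simpl in Hu; unfold AbsRing_ball, abs, minus, plus, opp in Hu; simpl in Hu.
    rewrite (rpow_le0 0) by lra. rewrite Rminus_0_r.
    destruct (Rlt_dec 0 u).
    + rewrite rpow_pos by auto. rewrite Rabs_pos_eq by (left; apply Rpower_pos).
      apply Rpower_0base_small; auto. apply cond_pos. split; auto.
      rewrite Ropp_0, Rplus_0_r, Rabs_pos_eq in Hu; lra.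
    + rewrite rpow_le0, Rabs_R0 by lra. apply cond_pos.
  - apply continuity_pt_locally. intros eps.
    assert (C: continuity_pt (fun z => Rpower z c) y).
    { apply derivable_continuous_pt. exists (c * Rpower y (c-1)). apply derivable_pt_lim_power; auto. }
    pose proof (proj1 (continuity_pt_locally _ _) C eps) as [d Hd].
    exists (mkposreal (Rmin d y) ltac:(apply Rmin_pos; [apply cond_pos|lra])).
    intros u Hu. unfold ball in Hu; simpl in Hu; unfold AbsRing_ball, abs, minus, plus, opp in Hu; simpl in Hu.
    assert (Hu1: Rabs (u - y) < d) by (apply Rlt_le_trans with (Rmin d y); auto; apply Rmin_l).
    assert (Hu2: Rabs (u - y) < y) by (apply Rlt_le_trans with (Rmin d y); auto; apply Rmin_r).
    apply Rabs_def2 in Hu2.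
    rewrite !rpow_pos by lra. apply Hd. unfold ball; simpl; unfold AbsRing_ball, abs, minus, plus, opp; simpl. auto.
Qed.

Lemma Lqnorm_q q f : 0 < q -> Lqnorm q f = q -> integral01 (fun x => rpow (Rabs (f x)) q) = Rpower q q.
Proof.
  unfold Lqnorm. intros Hq H. set (I := integral01 _) in *.
  destruct (Rlt_dec 0 I).
  - rewrite rpow_pos in H by auto. transitivity (Rpower (Rpower I (/q)) q).
    rewrite Rpower_mult, Rinv_l by lra. rewrite Rpower_1; auto. rewrite H; auto.
  - rewrite rpow_le0 in H by lra. lra.
Qed.

Lemma Lqnorm_q' q f : 0 < q -> integral01 (fun x => rpow (Rabs (f x)) q) = Rpower q q -> Lqnorm q f = q.
Proof.
  unfold Lqnorm. intros Hq H. rewrite H. rewrite rpow_pos by apply Rpower_pos. apply Rpower_inv; lra.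
Qed.

Lemma exRInt_all f a b : (forall x, continuity_pt f x) -> ex_RInt f a b.
Proof. intros H. apply (@ex_RInt_continuous R_CompleteNormedModule). intros; apply cont_continuous; auto. Qed.

Lemma antideriv f a x : (forall y, continuity_pt f y) -> is_derive (fun b => RInt f a b) x (f x).
Proof.
  intros H. apply (@is_derive_RInt R_CompleteNormedModule f (fun b => RInt f a b) a x).
  - apply filter_forall. intro b. apply (@RInt_correct R_CompleteNormedModule). apply exRInt_all; auto.
  - apply cont_continuous; auto.
Qed.

Lemma is_derive_val (f : R -> R) (x l l' : R) : l = l' -> is_derive f x l -> is_derive f x l'.
Proof. intros; subst; auto. Qed.
Lemma dpl_val f x l l' : l = l' -> derivable_pt_lim f x l -> derivable_pt_lim f x l'.
Proof. intros; subst; auto. Qed.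

Lemma FTC f df a b : (forall x, is_derive f x (df x)) -> (forall x, continuity_pt df x) ->
  RInt df a b = f b - f a.
Proof.
  intros H1 H2. apply (@is_RInt_unique R_CompleteNormedModule).
  apply (@is_RInt_derive R_CompleteNormedModule). intros; auto. intros; apply cont_continuous; auto.
Qed.

Lemma FTC_sm f a b : smooth f -> RInt (deriv f) a b = f b - f a.
Proof.
  intros H. apply FTC. intro x. apply is_derive_Reals, sm_derivable; auto.
  apply sm_cont, sm_deriv; auto.
Qed.

Lemma deriv_zero_const g : (forall x, is_derive g x 0) -> forall x y, g x = g y.
Proof.
  intros H x y. destruct (MVT_gen g y x (fun _ => 0)) as [c [_ Hc]].
  - intros; auto.
  - intros. apply derivable_continuous_pt. exists 0. apply is_derive_Reals; auto.
  - lra.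
Qed.

Lemma periodic_shift p c : (forall x, continuity_pt p x) -> (forall x, p (x + 1) = p x) ->
  RInt p c (c + 1) = RInt p 0 1.
Proof.
  intros Hc Hp.
  set (g := fun c => RInt p 0 (c + 1) - RInt p 0 c).
  assert (E: forall c, RInt p c (c+1) = g c).
  { intro d. unfold g.
    assert (C: RInt p 0 d + RInt p d (d+1) = RInt p 0 (d+1)) by
      (apply (@RInt_Chasles R_CompleteNormedModule); apply exRInt_all; auto).
    lra. }
  rewrite (E c). transitivity (g 0). 2: (rewrite <- E; rewrite Rplus_0_l; reflexivity).
  apply deriv_zero_const. intro x. unfold g.
  apply (is_derive_val _ _ (p (x + 1) * 1 - p x)). rewrite Hp; ring.
  apply is_derive_Reals. apply derivable_pt_lim_minus.
  - apply (dpl_comp (fun b => RInt p 0 b) (fun y => y + 1)).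
    replace 1 with (1 + 0) by ring. apply dpl_plus. apply dpl_id. apply dpl_const.
    apply is_derive_Reals. apply antideriv; auto.
  - apply is_derive_Reals. apply antideriv; auto.
Qed.

Lemma shift_int p c : (forall x, continuity_pt p x) -> (forall x, p (x + 1) = p x) ->
  RInt (fun x => p (x + c)) 0 1 = RInt p 0 1.
Proof.
  intros Hc Hp. rewrite <- (periodic_shift p c) by auto.
  pose proof (@RInt_comp_lin R_CompleteNormedModule p 1 c 0 1) as E.
  replace (1 * 0 + c) with c in E by ring. replace (1 * 1 + c) with (c + 1) in E by ring.
  rewrite <- E by (apply exRInt_all; auto). apply RInt_ext. intros. unfold scal; simpl; unfold mult; simpl.
  f_equal. ring_simplify. f_equal; ring. 
Qed.

Lemma deriv_periodic phi : smooth phi -> (forall x, phi (x + 1) = phi x + 1) ->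
  forall x, deriv phi (x + 1) = deriv phi x.
Proof.
  intros Hs Hp x. symmetry. apply deriv_eq.
  apply dpl_ext with (fun y => phi (y + 1) - 1). intro; rewrite Hp; ring.
  replace (deriv phi (x+1)) with (deriv phi (x+1) * 1 - 0) by ring.
  apply derivable_pt_lim_minus. 2: apply dpl_const.
  apply (dpl_comp phi (fun y => y + 1)). replace 1 with (1 + 0) by ring. apply dpl_plus. apply dpl_id. apply dpl_const.
  apply sm_derivable; auto.
Qed.

Lemma RInt_scal' (g : R -> R) c a b : ex_RInt g a b -> RInt (fun x => c * g x) a b = c * RInt g a b.
Proof. intro H. apply (@RInt_scal R_CompleteNormedModule g a b c H). Qed.

Lemma sm_exRInt g a b : smooth g -> ex_RInt g a b.
Proof. intro; apply exRInt_all; apply sm_cont; auto. Qed.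

Lemma part2_fwd q phi f : 1 <= q -> DiffS1_0 phi -> (forall x, Phi q phi x = f x) -> Uq q f.
Proof.
  intros Hq [Hs [Hp [Hd H0]]] HF.
  assert (Ef: forall x, f x = q * Rpower (deriv phi x) (/q)).
  { intro x. rewrite <- HF. unfold Phi. rewrite rpow_pos; auto. }
  assert (Sf: smooth f).
  { apply sm_ext with (fun x => q * Rpower (deriv phi x) (/q)). intro; rewrite Ef; auto.
    apply sm_scal, sm_Rpower; auto. apply sm_deriv; auto. }
  split; [split|split]; auto.
  - intro x. rewrite !Ef, deriv_periodic; auto.
  - intro x. rewrite Ef. apply Rmult_lt_0_compat; [lra| apply Rpower_pos].
  - apply Lqnorm_q'; [lra|].
    assert (E: forall x, rpow (Rabs (f x)) q = Rpower q q * deriv phi x).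
    { intro x. rewrite Ef. rewrite Rabs_pos_eq by (apply Rmult_le_pos; [lra| left; apply Rpower_pos]).
      rewrite rpow_pos by (apply Rmult_lt_0_compat; [lra| apply Rpower_pos]).
      rewrite <- Rpower_mult_distr by (try lra; apply Rpower_pos).
      rewrite Rpower_mult, Rinv_l, Rpower_1 by (auto; lra). auto. }
    rewrite (functional_extensionality _ _ E).
    rewrite int01_RInt. rewrite RInt_scal'. rewrite FTC_sm; auto.
    pose proof (Hp 0) as E1. rewrite Rplus_0_l, H0 in E1. rewrite E1, H0; ring.
    apply sm_exRInt, sm_deriv; auto.
    apply sm_exRInt. apply sm_scal, sm_deriv; auto.
Qed.

Lemma part2_bwd q f : 1 <= q -> Uq q f -> exists phi, DiffS1_0 phi /\ forall x, Phi q phi x = f x.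
Proof.
  intros Hq [[Hs Hper] [Hpos Hn]].
  set (a := fun x => Rpower (/ q * f x) q).
  assert (Ha_pos: forall x, 0 < a x) by (intro; apply Rpower_pos).
  assert (Ha_sm: smooth a).
  { apply sm_Rpower. apply sm_scal; auto. intro x. apply Rmult_lt_0_compat; auto. apply Rinv_0_lt_compat; lra. }
  assert (Ha_c: forall x, continuity_pt a x) by (apply sm_cont; auto).
  assert (Ha_per: forall x, a (x + 1) = a x) by (intro; unfold a; rewrite Hper; auto).
  assert (Hint: RInt a 0 1 = 1).
  { apply Lqnorm_q in Hn; [|lra].
    assert (E: forall x, rpow (Rabs (f x)) q = Rpower q q * a x).
    { intro x. rewrite Rabs_pos_eq by (left; auto). rewrite rpow_pos by auto. unfold a.
      rewrite Rpower_mult_distr. f_equal. field. lra. lra.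
      apply Rmult_lt_0_compat; auto. apply Rinv_0_lt_compat; lra. }
    rewrite (functional_extensionality _ _ E) in Hn.
    rewrite int01_RInt in Hn. rewrite RInt_scal' in Hn.
    apply Rmult_eq_reg_l with (Rpower q q). rewrite Hn; ring.
    apply Rgt_not_eq, Rpower_pos.
    apply exRInt_all; auto. apply exRInt_all. intro. apply continuity_pt_mult; auto. apply continuity_pt_const; intros ? ?; auto. }
  set (phi := fun x => RInt a 0 x).
  assert (Hd: forall x, derivable_pt_lim phi x (a x)).
  { intro x. apply is_derive_Reals. apply antideriv; auto. }
  exists phi. split; [split; [|split; [|split]]|].
  - apply smooth_Dn. intro n. apply Dn_S. simpl. exists a. split; auto.
    apply smooth_Dn; auto.
  - intro x. unfold phi.
    assert (C: RInt a 0 x + RInt a x (x+1) = RInt a 0 (x+1)) by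
      (apply (@RInt_Chasles R_CompleteNormedModule); apply exRInt_all; auto).
    rewrite periodic_shift in C; auto. lra.
  - intro x. rewrite (deriv_eq _ _ _ (Hd x)). auto.
  - unfold phi. apply (@RInt_point R_CompleteNormedModule).
  - intro x. unfold Phi. rewrite (deriv_eq _ _ _ (Hd x)). rewrite rpow_pos by auto. unfold a.
    rewrite Rpower_mult, Rinv_r, Rpower_1 by (try lra; apply Rmult_lt_0_compat; auto; apply Rinv_0_lt_compat; lra).
    field. lra.
Qed.

Section Inv.
Variable phi : R -> R.
Hypothesis Hs : smooth phi.
Hypothesis Hp : forall x, phi (x + 1) = phi x + 1.
Hypothesis Hd : forall x, 0 < deriv phi x.
Hypothesis H0 : phi 0 = 0.

Lemma phi_cont x : continuity_pt phi x.
Proof. apply sm_cont; auto. Qed.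

Lemma phi_incr x y : x < y -> phi x < phi y.
Proof.
  intro Hxy. destruct (MVT_gen phi x y (deriv phi)) as [c [_ Hc]].
  - intros; apply is_derive_Reals, sm_derivable; auto.
  - intros; apply phi_cont.
  - pose proof (Hd c). 
    assert (0 < deriv phi c * (y - x)) by (apply Rmult_lt_0_compat; lra). lra.
Qed.

Lemma phi_nat n x : phi (x + INR n) = phi x + INR n.
Proof.
  induction n. simpl; rewrite !Rplus_0_r; auto.
  rewrite S_INR. replace (x + (INR n + 1)) with ((x + INR n) + 1) by ring. rewrite Hp, IHn. ring.
Qed.

Lemma phi_surj y : exists x, phi x = y.
Proof.
  destruct (INR_archimed 1 (Rabs y)) as [n Hn]; [lra|]. rewrite Rmult_1_r in Hn.
  assert (E1: phi (INR n) = INR n) by (pose proof (phi_nat n 0) as E; rewrite Rplus_0_l, H0, Rplus_0_l in E; auto).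
  assert (E2: phi (- INR n) = - INR n).
  { pose proof (phi_nat n (- INR n)) as E. replace (- INR n + INR n) with 0 in E by ring. rewrite H0 in E. lra. }
  destruct (IVT_gen phi (- INR n) (INR n) y) as [x [_ Hx]].
  - intro; apply phi_cont.
  - rewrite E1, E2. pose proof (Rle_abs y). pose proof (Rle_abs (-y)). rewrite Rabs_Ropp in *.
    rewrite Rmin_left, Rmax_right by lra. lra.
  - exists x; auto.
Qed.

Lemma phi_inj x y : phi x = phi y -> x = y.
Proof.
  intro E. destruct (Rtotal_order x y) as [H|[H|H]]; auto.
  apply phi_incr in H; lra. apply phi_incr in H; lra.
Qed.

Lemma phi_inv_r y : phi (inv phi y) = y.
Proof.
  unfold inv. destruct (phi_surj y) as [x Hx].
  apply (epsilon_spec (inhabits 0) (fun x => phi x = y)). exists x; auto.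
Qed.

Lemma phi_inv_l x : inv phi (phi x) = x.
Proof. apply phi_inj. apply phi_inv_r. Qed.

Lemma inv_incr x y : x < y -> inv phi x < inv phi y.
Proof.
  intro H. destruct (Rtotal_order (inv phi x) (inv phi y)) as [H1|[H1|H1]]; auto.
  - apply (f_equal phi) in H1. rewrite !phi_inv_r in H1. lra.
  - apply phi_incr in H1. rewrite !phi_inv_r in H1. lra.
Qed.

Lemma inv_cont y : continuity_pt (inv phi) y.
Proof.
  apply (Ranalysis5.continuity_pt_recip_prelim phi (inv phi) (inv phi y - 1) (inv phi y + 1)).
  - lra.
  - intros; apply phi_incr; auto.
  - intros; unfold comp, id; apply phi_inv_l.
  - intros; apply phi_cont.
  - split.
    + rewrite <- (phi_inv_r y) at 2. apply phi_incr; lra.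
    + rewrite <- (phi_inv_r y) at 1. apply phi_incr; lra.
Qed.

Lemma inv_deriv y : derivable_pt_lim (inv phi) y (/ deriv phi (inv phi y)).
Proof.
  assert (Prf: forall a, inv phi (y - 1) <= a <= inv phi (y + 1) -> derivable_pt phi a).
  { intros a _. exists (deriv phi a). apply sm_derivable; auto. }
  assert (Pi: inv phi (y - 1) <= inv phi y <= inv phi (y + 1)).
  { split; left; apply inv_incr; lra. }
  pose proof (Ranalysis5.derivable_pt_lim_recip_interv phi (inv phi) (y - 1) (y + 1) y Prf (inv_cont y)
    ltac:(lra) ltac:(lra) Pi) as D.
  assert (E: derive_pt phi (inv phi y) (Prf (inv phi y) Pi) = deriv phi (inv phi y)).
  { apply derive_pt_eq_0. apply sm_derivable; auto. }
  rewrite E in D. unfold Rdiv in D. rewrite Rmult_1_l in D. apply D.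
  - intros; unfold comp, id; apply phi_inv_r.
  - apply Rgt_not_eq, Hd.
Qed.

End Inv.

Lemma cont_comp f g x : continuity_pt g x -> continuity_pt f (g x) -> continuity_pt (fun y => f (g y)) x.
Proof. intros; apply (continuity_pt_comp g f); auto. Qed.
Lemma cont_mult f g x : continuity_pt f x -> continuity_pt g x -> continuity_pt (fun y => f y * g y) x.
Proof. intros; apply (continuity_pt_mult f g); auto. Qed.
Lemma cont_plus f g x : continuity_pt f x -> continuity_pt g x -> continuity_pt (fun y => f y + g y) x.
Proof. intros; apply (continuity_pt_plus f g); auto. Qed.
Lemma cont_const c x : continuity_pt (fun _ => c) x.
Proof. apply continuity_pt_const; intros ? ?; auto. Qed.
Lemma cont_inv f x : continuity_pt f x -> f x <> 0 -> continuity_pt (fun y => / f y) x.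
Proof. intros; apply (continuity_pt_inv f); auto. Qed.
Lemma cont_abs f x : continuity_pt f x -> continuity_pt (fun y => Rabs (f y)) x.
Proof. intros; apply (cont_comp Rabs f x); [auto| apply Rcontinuity_abs]. Qed.
Lemma cont_rpow f c x : 0 < c -> continuity_pt f x -> continuity_pt (fun y => rpow (f y) c) x.
Proof. intros; apply (cont_comp (fun z => rpow z c) f x); [auto| apply rpow_cont; auto]. Qed.

Lemma deriv_sum phi h e x : smooth phi -> smooth h ->
  deriv (fun y => phi y + e * h y) x = deriv phi x + e * deriv h x.
Proof.
  intros H1 H2. apply deriv_eq. apply dpl_val with (deriv phi x + (0 * h x + e * deriv h x)). ring.
  apply dpl_plus. apply sm_derivable; auto.
  apply (dpl_mult (fun _ => e) h). apply dpl_const. apply sm_derivable; auto.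
Qed.

Lemma Rpower_alg a b q : 0 < a -> 0 < q ->
  rpow (Rabs (Rpower a (/ q - 1) * b)) q = a * rpow (Rabs (b * / a)) q.
Proof.
  intros Ha Hq. destruct (Req_dec b 0) as [Hb|Hb].
  - subst b. rewrite Rmult_0_r, Rmult_0_l, Rabs_R0, rpow_le0 by lra. ring.
  - assert (Hb': 0 < Rabs b) by (apply Rabs_pos_lt; auto).
    rewrite !Rabs_mult. rewrite (Rabs_pos_eq (Rpower _ _)) by (left; apply Rpower_pos).
    rewrite (Rabs_pos_eq (/ a)) by (left; apply Rinv_0_lt_compat; auto).
    rewrite !rpow_pos by (try apply Rmult_lt_0_compat; auto; try apply Rpower_pos; apply Rinv_0_lt_compat; auto).
    unfold Rpower. rewrite !ln_mult by (auto; try apply exp_pos; apply Rinv_0_lt_compat; auto).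
    rewrite ln_exp, ln_Rinv by auto.
    replace (a * exp (q * (ln (Rabs b) + - ln a))) with (exp (ln a) * exp (q * (ln (Rabs b) + - ln a))) by (rewrite exp_ln; auto).
    rewrite <- exp_plus. f_equal. field. lra.
Qed.

Lemma part1 q phi h : 1 <= q -> DiffS1_0 phi -> tangent h ->
     (forall x, exists l,
        derivable_pt_lim (fun e => Phi q (fun y => phi y + e * h y) x) 0 l) /\
     Lqnorm q (dPhi q phi h) = Fmetric q phi h.
Proof.
  intros Hq [Hs [Hp [Hd H0]]] [[Hhs Hhp] Hh0].
  set (a := deriv phi). set (b := deriv h).
  assert (Ha_sm: smooth a) by (apply sm_deriv; auto).
  assert (Hb_sm: smooth b) by (apply sm_deriv; auto).
  assert (Ha_c: forall x, continuity_pt a x) by (apply sm_cont; auto).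
  assert (Hb_c: forall x, continuity_pt b x) by (apply sm_cont; auto).
  assert (Hder: forall x, derivable_pt_lim (fun e => Phi q (fun y => phi y + e * h y) x) 0
                      (Rpower (a x) (/ q - 1) * b x)).
  { intro x. unfold Phi.
    apply dpl_ext with (fun e => q * rpow (a x + e * b x) (/ q)).
    { intro e. rewrite deriv_sum; auto. }
    apply is_derive_Reals.
    apply (is_derive_ext_loc (fun e => q * Rpower (a x + e * b x) (/ q))).
    - assert (Hpos: 0 < a x / (Rabs (b x) + 1)).
      { apply Rdiv_lt_0_compat. apply Hd. pose proof (Rabs_pos (b x)); lra. }
      exists (mkposreal _ Hpos). intros e He.
      unfold ball in He; simpl in He; unfold AbsRing_ball, abs, minus, plus, opp in He; simpl in He.
      rewrite Ropp_0, Rplus_0_r in He.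
      rewrite rpow_pos; auto.
      assert (Rabs (e * b x) < a x).
      { rewrite Rabs_mult. pose proof (Rabs_pos (b x)). pose proof (Rabs_pos e). pose proof (Hd x).
        apply Rle_lt_trans with (Rabs e * (Rabs (b x) + 1)). nra.
        apply Rmult_lt_reg_r with (/ (Rabs (b x) + 1)). apply Rinv_0_lt_compat; lra.
        rewrite Rmult_assoc, Rinv_r, Rmult_1_r by lra. auto. }
      pose proof (Rabs_def2 _ _ H). lra.
    - apply is_derive_Reals.
      apply dpl_val with (0 * Rpower (a x + 0 * b x) (/q) + q * ((/ q * Rpower (a x + 0 * b x) (/q - 1)) * (1 * b x + 0 * 0))).
      { repeat rewrite Rmult_0_l; repeat rewrite Rplus_0_r; repeat rewrite Rplus_0_l. field. lra. }
      apply (dpl_mult (fun _ => q) (fun e => Rpower (a x + e * b x) (/ q))). apply dpl_const.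
      apply (dpl_comp (fun z => Rpower z (/ q)) (fun e => a x + e * b x)).
      + apply dpl_val with (0 + (1 * b x + 0 * 0)). ring.
        apply dpl_plus. apply dpl_const. apply (dpl_mult (fun e => e) (fun _ => b x)). apply dpl_id. apply dpl_const.
      + apply derivable_pt_lim_power. rewrite Rmult_0_l, Rplus_0_r. apply Hd. }
  split.
  - intro x. eexists. apply Hder.
  - assert (EdP: dPhi q phi h = fun x => Rpower (a x) (/ q - 1) * b x).
    { apply functional_extensionality. intro x. unfold dPhi. apply deriv_eq, Hder. }
    set (psi := inv phi).
    assert (Hpsi_c: forall y, continuity_pt psi y) by (intro; apply inv_cont; auto).
    assert (Hpsi: forall y, derivable_pt_lim psi y (/ a (psi y))) by (intro; apply inv_deriv; auto).
    assert (EK: deriv (fun th => h (psi th)) = fun th => b (psi th) * / a (psi th)).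
    { apply functional_extensionality. intro th. apply deriv_eq.
      apply (dpl_comp h psi). apply Hpsi. apply sm_derivable; auto. }
    unfold Fmetric, Lqnorm. fold psi. rewrite EdP, EK. f_equal.
    set (Q := fun th => rpow (Rabs (b (psi th) * / a (psi th))) q).
    assert (HQc: forall th, continuity_pt Q th).
    { intro th. unfold Q. apply cont_rpow. lra. apply cont_abs. apply cont_mult.
      apply cont_comp; auto. apply cont_inv. apply cont_comp; auto. apply Rgt_not_eq, Hd. }
    assert (EP: forall x, rpow (Rabs (Rpower (a x) (/ q - 1) * b x)) q = a x * Q (phi x)).
    { intro x. unfold Q, psi. rewrite phi_inv_l; auto. apply Rpower_alg. apply Hd. lra. }
    rewrite (functional_extensionality _ _ EP).
    rewrite !int01_RInt.
    + pose proof (@RInt_comp R_CompleteNormedModule Q phi a 0 1) as C.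
      rewrite H0 in C. pose proof (Hp 0) as E1. rewrite Rplus_0_l, H0, Rplus_0_l in E1. rewrite E1 in C.
      rewrite <- C. apply RInt_ext. intros; reflexivity.
      * intros; apply cont_continuous; auto.
      * intros; split. apply is_derive_Reals, sm_derivable; auto. apply cont_continuous; auto.
    + apply exRInt_all; auto.
    + apply exRInt_all. intro x. apply cont_mult; auto. apply cont_comp; auto. apply sm_cont; auto.
Qed.

Lemma cont2_2d H t x : cont2 H -> continuity_2d_pt H t x.
Proof.
  intros C eps. destruct (C t x eps (cond_pos eps)) as [d [Hd P]].
  exists (mkposreal d Hd). intros u v Hu Hv. apply P; auto.
Qed.

Lemma cont2_of_2d H : (forall t x, continuity_2d_pt H t x) -> cont2 H.
Proof.
  intros C t x eps He. destruct (C t x (mkposreal eps He)) as [d P].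
  exists d. split. apply cond_pos. intros; apply P; auto.
Qed.

Lemma cont2_swap H : cont2 H -> cont2 (fun x t => H t x).
Proof.
  intros C x t eps He. destruct (C t x eps He) as [d [Hd P]]. exists d; split; auto.
Qed.

Lemma cont2_slice1 H t x : cont2 H -> continuity_pt (fun y => H t y) x.
Proof.
  intros C. apply continuity_pt_locally. intro eps. destruct (C t x eps (cond_pos eps)) as [d [Hd P]].
  exists (mkposreal d Hd). intros y Hy. apply P. rewrite Rminus_eq_0, Rabs_R0; auto. apply Hy.
Qed.
Lemma cont2_slice2 H t x : cont2 H -> continuity_pt (fun s => H s x) t.
Proof. intros C. apply (cont2_slice1 (fun x t => H t x)). apply cont2_swap; auto. Qed.

Lemma cont_minus f g x : continuity_pt f x -> continuity_pt g x -> continuity_pt (fun y => f y - g y) x.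
Proof. intros; apply (continuity_pt_minus f g); auto. Qed.

Lemma RInt_minus' (f g : R -> R) a b : ex_RInt f a b -> ex_RInt g a b ->
  RInt (fun x => f x - g x) a b = RInt f a b - RInt g a b.
Proof. intros. apply (@RInt_minus R_CompleteNormedModule); auto. Qed.

Lemma param_cont_le H a b t0 : cont2 H -> a <= b -> continuity_pt (fun t => RInt (fun x => H t x) a b) t0.
Proof.
  intros C Hab. apply continuity_pt_locally. intro eps.
  assert (He: 0 < eps / (b - a + 1)) by (apply Rdiv_lt_0_compat; [apply cond_pos| lra]).
  destruct (uniform_continuity_2d H (t0 - 1) (t0 + 1) a b) with (eps := mkposreal _ He) as [d Hd].
  { intros; apply cont2_2d; auto. }
  exists (mkposreal (Rmin d 1) ltac:(apply Rmin_pos; [apply cond_pos|lra])).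
  intros u Hu. unfold ball in Hu; simpl in Hu; unfold AbsRing_ball, abs, minus, plus, opp in Hu; simpl in Hu.
  assert (Hu1: Rabs (u - t0) < d) by (apply Rlt_le_trans with (Rmin d 1); auto; apply Rmin_l).
  assert (Hu2: Rabs (u - t0) < 1) by (apply Rlt_le_trans with (Rmin d 1); auto; apply Rmin_r).
  pose proof (Rabs_def2 _ _ Hu2).
  rewrite <- RInt_minus' by (apply exRInt_all; intro; apply cont2_slice1; auto).
  apply Rle_lt_trans with ((b - a) * (eps / (b - a + 1))).
  - apply abs_RInt_le_const; auto. apply exRInt_all; intro; apply cont_minus; apply cont2_slice1; auto.
    intros y Hy. left. apply (Hd t0 y u y); try lra. rewrite Rminus_eq_0, Rabs_R0; apply cond_pos.
  - apply Rlt_le_trans with ((b - a + 1) * (eps / (b - a + 1))).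
    apply Rmult_lt_compat_r; auto; lra. right; field; lra.
Qed.

Lemma param_cont H a b t0 : cont2 H -> continuity_pt (fun t => RInt (fun x => H t x) a b) t0.
Proof.
  intros C. destruct (Rle_dec a b). apply param_cont_le; auto.
  apply continuity_pt_ext with (fun t => - RInt (fun x => H t x) b a).
  { intro t. symmetry. rewrite <- (@opp_RInt_swap R_CompleteNormedModule). reflexivity.
    apply exRInt_all; intro; apply cont2_slice1; auto. }
  apply continuity_pt_opp. apply param_cont_le; auto; lra.
Qed.

Lemma Rpower_q_1 A q : 0 < A -> Rpower A (q - 1) * A = Rpower A q.
Proof. intro. rewrite <- (Rpower_1 A) at 2 by auto. rewrite <- Rpower_plus. f_equal; ring. Qed.

Lemma bern A y q : 1 <= q -> 0 < A -> 0 <= y ->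
  Rpower A q + q * Rpower A (q - 1) * (y - A) <= rpow y q.
Proof.
  intros Hq HA Hy. pose proof (Rpower_q_1 A q HA) as E.
  pose proof (Rpower_pos A q). pose proof (Rpower_pos A (q-1)).
  destruct Hy as [Hy|Hy].
  2: { subst y. rewrite rpow_le0 by lra. nra. }
  rewrite rpow_pos by auto.
  set (k := fun z => Rpower z q - q * Rpower A (q - 1) * z).
  assert (K: k A <= k y).
  { destruct (MVT_gen k A y (fun z => q * Rpower z (q - 1) - q * Rpower A (q - 1))) as [c [Hc Hk]].
    - intros x Hx. apply is_derive_Reals.
      assert (0 < x). { destruct (Rle_dec A y); [rewrite Rmin_left in Hx|rewrite Rmin_right in Hx]; lra. }
      apply derivable_pt_lim_minus. apply derivable_pt_lim_power; auto.
      apply dpl_val with (0 * x + q * Rpower A (q - 1) * 1). ring.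
      apply (dpl_mult (fun _ => q * Rpower A (q - 1)) (fun z => z)). apply dpl_const. apply dpl_id.
    - intros x Hx. apply derivable_continuous_pt.
      assert (0 < x). { destruct (Rle_dec A y); [rewrite Rmin_left in Hx|rewrite Rmin_right in Hx]; lra. }
      exists (q * Rpower x (q - 1) - q * Rpower A (q - 1)).
      apply derivable_pt_lim_minus. apply derivable_pt_lim_power; auto.
      apply dpl_val with (0 * x + q * Rpower A (q - 1) * 1). ring.
      apply (dpl_mult (fun _ => q * Rpower A (q - 1)) (fun z => z)). apply dpl_const. apply dpl_id.
    - destruct (Rle_dec A y).
      + rewrite Rmin_left, Rmax_right in Hc by lra.
        assert (Rpower A (q-1) <= Rpower c (q-1)) by (apply Rle_Rpower_l; lra).
        assert (0 <= (q * Rpower c (q - 1) - q * Rpower A (q - 1)) * (y - A)) by (apply Rmult_le_pos; nra).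
        lra.
      + rewrite Rmin_right, Rmax_left in Hc by lra.
        assert (0 < c) by lra.
        assert (Rpower c (q-1) <= Rpower A (q-1)) by (apply Rle_Rpower_l; lra).
        assert (0 <= (q * Rpower c (q - 1) - q * Rpower A (q - 1)) * (y - A)) by
          (replace ((q * Rpower c (q - 1) - q * Rpower A (q - 1)) * (y - A)) with
             ((q * Rpower A (q - 1) - q * Rpower c (q - 1)) * (A - y)) by ring; apply Rmult_le_pos; nra).
        lra. }
  unfold k in K. rewrite Rmult_assoc in K. rewrite E in K. nra.
Qed.

Lemma RInt_ext' (f g : R -> R) a b : (forall x, f x = g x) -> RInt f a b = RInt g a b.
Proof. intro H. apply RInt_ext. intros; apply H. Qed.

Lemma RInt_affine (g : R -> R) c1 c2 A : ex_RInt g 0 1 ->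
  RInt (fun x => c1 + c2 * (g x - A)) 0 1 = c1 + c2 * (RInt g 0 1 - A).
Proof.
  intro Hg. rewrite (RInt_ext' _ (fun x => (c1 - c2 * A) + c2 * g x)) by (intros; ring).
  assert (E: RInt (fun x => (c1 - c2 * A) + c2 * g x) 0 1 = RInt (fun _ => c1 - c2 * A) 0 1 + RInt (fun x => c2 * g x) 0 1).
  { apply (@RInt_plus R_CompleteNormedModule).
    apply (@ex_RInt_const R_CompleteNormedModule).
    apply (@ex_RInt_scal R_CompleteNormedModule); auto. }
  rewrite E. rewrite RInt_const, RInt_scal'; auto.
  unfold scal; simpl; unfold mult; simpl. ring.
Qed.

Lemma jensen u q : 1 <= q -> (forall x, continuity_pt u x) ->
  RInt (fun x => Rabs (u x)) 0 1 <= rpow (RInt (fun x => rpow (Rabs (u x)) q) 0 1) (/ q).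
Proof.
  intros Hq Hc. set (A := RInt (fun x => Rabs (u x)) 0 1).
  assert (Ex1: ex_RInt (fun x => Rabs (u x)) 0 1) by (apply exRInt_all; intro; apply cont_abs; auto).
  assert (Ex2: ex_RInt (fun x => rpow (Rabs (u x)) q) 0 1) by (apply exRInt_all; intro; apply cont_rpow; [lra|]; apply cont_abs; auto).
  assert (HA: 0 <= A) by (apply RInt_ge_0; auto; lra || (intros; apply Rabs_pos)).
  destruct HA as [HA|HA]; [| rewrite <- HA; apply rpow_ge0].
  assert (I: Rpower A q <= RInt (fun x => rpow (Rabs (u x)) q) 0 1).
  { apply Rle_trans with (RInt (fun x => Rpower A q + q * Rpower A (q - 1) * (Rabs (u x) - A)) 0 1).
    - rewrite RInt_affine; auto. fold A. lra.
    - apply RInt_le; auto. lra. apply exRInt_all. intro. apply cont_plus. apply cont_const.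
      apply cont_mult. apply cont_const. apply cont_minus. apply cont_abs; auto. apply cont_const.
      intros. apply bern; auto. apply Rabs_pos. }
  apply Rle_trans with (rpow (Rpower A q) (/ q)).
  - rewrite rpow_pos by apply Rpower_pos. rewrite Rpower_inv; lra.
  - apply rpow_mono; auto. apply Rinv_0_lt_compat; lra.
Qed.

Lemma cont2_comp (phi : R -> R) H : (forall y, continuity_pt phi y) -> cont2 H -> cont2 (fun t x => phi (H t x)).
Proof.
  intros Hp C t x eps He.
  pose proof (proj1 (continuity_pt_locally _ _) (Hp (H t x)) (mkposreal eps He)) as [d1 P1].
  destruct (C t x d1 (cond_pos d1)) as [d [Hd P]].
  exists d; split; auto. intros s y Hs Hy. apply (P1 (H s y)).
  unfold ball; simpl; unfold AbsRing_ball, abs, minus, plus, opp; simpl. apply P; auto.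
Qed.

Lemma fubini H : cont2 H ->
  RInt (fun x => RInt (fun t => H t x) 0 1) 0 1 = RInt (fun t => RInt (fun x => H t x) 0 1) 0 1.
Proof.
  intros C.
  set (f := fun tau x => RInt (fun t => H t x) 0 tau).
  set (A := fun tau => RInt (fun x => f tau x) 0 1).
  set (J := fun t => RInt (fun x => H t x) 0 1).
  assert (Jc: forall t, continuity_pt J t) by (intro; apply param_cont; auto).
  assert (Hf: forall tau x, is_derive (fun u => f u x) tau (H tau x)).
  { intros tau x. apply (antideriv (fun t => H t x) 0 tau). intro; apply cont2_slice2; auto. }
  assert (HA: forall tau, is_derive A tau (J tau)).
  { intro tau. unfold A, J.
    apply (is_derive_ext (fun tau => RInt (fun x => f tau x) 0 1)). intros; reflexivity.
    apply (is_derive_val _ _ (RInt (fun x => Derive (fun u => f u x) tau) 0 1)).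
    { apply RInt_ext. intros. apply is_derive_unique. apply Hf. }
    apply (@is_derive_RInt_param f 0 1 tau).
    - apply filter_forall. intros y t _. exists (H y t). apply Hf.
    - intros t _. apply continuity_2d_pt_ext with H.
      { intros u v. symmetry. apply is_derive_unique. apply Hf. }
      apply cont2_2d; auto.
    - apply filter_forall. intros y. apply exRInt_all. intro x.
      unfold f. apply (param_cont (fun x t => H t x)). apply cont2_swap; auto. }
  pose proof (FTC A J 0 1 HA Jc) as E.
  assert (A0: A 0 = 0).
  { unfold A, f. rewrite (RInt_ext _ (fun _ => 0)). rewrite RInt_const. unfold scal; simpl; unfold mult; simpl; ring.
    intros. apply (@RInt_point R_CompleteNormedModule). }
  rewrite A0, Rminus_0_r in E. unfold A, f in E. rewrite E. reflexivity.
Qed.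

Lemma path_basic q f g F : 1 <= q -> Uq_path q f g F ->
  exists L, (forall t, continuity_pt L t) /\ (forall t, 0 <= L t) /\ path_length q F = RInt L 0 1 /\
    RInt (fun x => Rabs (g x - f x)) 0 1 <= path_length q F.
Proof.
  intros Hq [[G [HG0 [Ht [Hx Hc]]]] [HU [HF0 HF1]]].
  assert (D: forall t x, deriv (fun s => F s x) t = G 1%nat 0%nat t x).
  { intros t x. apply deriv_eq. subst F. apply Ht. }
  set (H := fun t x => rpow (Rabs (G 1%nat 0%nat t x)) q).
  assert (CH: cont2 H).
  { apply (cont2_comp (fun y => rpow (Rabs y) q)). intro; apply cont_rpow. lra. apply cont_abs, continuity_pt_id. auto. }
  set (L := fun t => rpow (RInt (fun x => H t x) 0 1) (/ q)).
  assert (EL: forall t, Lqnorm q (fun x => deriv (fun s => F s x) t) = L t).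
  { intro t. unfold Lqnorm, L. f_equal. rewrite int01_RInt.
    apply RInt_ext. intros. cbv beta. unfold H. f_equal. f_equal. apply D.
    apply exRInt_all. intro x. apply continuity_pt_ext with (fun x => H t x). intro; unfold H; rewrite D; auto. apply (cont2_slice1 H); auto. }
  assert (Lc: forall t, continuity_pt L t).
  { intro t. unfold L. apply cont_rpow. apply Rinv_0_lt_compat; lra. apply param_cont; auto. }
  assert (EP: path_length q F = RInt L 0 1).
  { unfold path_length. rewrite (functional_extensionality _ _ EL). apply int01_RInt. apply exRInt_all; auto. }
  exists L. split; auto. split. intro; apply rpow_ge0. split; auto.
  rewrite EP.
  set (K := fun t x => Rabs (G 1%nat 0%nat t x)).
  assert (CK: cont2 K) by (apply (cont2_comp Rabs); auto; intro; apply Rcontinuity_abs).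
  assert (C10: cont2 (G 1%nat 0%nat)) by auto.
  assert (E1: forall x, g x - f x = RInt (fun t => G 1%nat 0%nat t x) 0 1).
  { intro x. rewrite <- HF0, <- HF1. subst F. symmetry.
    apply (FTC (fun s => G 0%nat 0%nat s x) (fun s => G 1%nat 0%nat s x)).
    intro; apply is_derive_Reals; apply Ht. intro; apply cont2_slice2; auto. }
  apply Rle_trans with (RInt (fun x => RInt (fun t => K t x) 0 1) 0 1).
  { apply RInt_le. lra.
    - apply exRInt_all. intro x. apply cont_abs. apply cont_minus.
      apply (sm_cont g). destruct (HU 1 ltac:(lra)) as [[Sg _] _]. apply (sm_ext (F 1)); auto.
      apply (sm_cont f). destruct (HU 0 ltac:(lra)) as [[Sf _] _]. apply (sm_ext (F 0)); auto.
    - apply exRInt_all. intro x. apply (param_cont (fun x t => K t x)). apply cont2_swap; auto.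
    - intros x _. rewrite E1. apply abs_RInt_le. lra. apply exRInt_all. intro; apply cont2_slice2; auto. }
  rewrite fubini by auto.
  apply RInt_le. lra.
  - apply exRInt_all. intro; apply param_cont; auto.
  - apply exRInt_all; auto.
  - intros t _. unfold K, L, H. apply jensen; auto. intro; apply cont2_slice1; auto.
Qed.

Fixpoint C2 (n : nat) (F : R -> R -> R) : Prop :=
  match n with
  | O => cont2 F
  | S m => cont2 F /\ exists Ft Fx,
      (forall t x, derivable_pt_lim (fun s => F s x) t (Ft t x)) /\
      (forall t x, derivable_pt_lim (fun y => F t y) x (Fx t x)) /\ C2 m Ft /\ C2 m Fx
  end.

Lemma C2_cont n F : C2 n F -> cont2 F.
Proof. destruct n; simpl; tauto. Qed.

Lemma C2_S n : forall F, C2 (S n) F -> C2 n F.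
Proof.
  induction n; simpl. tauto.
  intros F [C [Ft [Fx [H1 [H2 [H3 H4]]]]]]. split; auto. exists Ft, Fx. repeat split; auto.
Qed.

Lemma cont2_comp' (phi : R -> R) H : (forall t x, continuity_pt phi (H t x)) -> cont2 H -> cont2 (fun t x => phi (H t x)).
Proof.
  intros Hp C t x eps He.
  pose proof (proj1 (continuity_pt_locally _ _) (Hp t x) (mkposreal eps He)) as [d1 P1].
  destruct (C t x d1 (cond_pos d1)) as [d [Hd P]].
  exists d; split; auto. intros s y Hs Hy. apply (P1 (H s y)).
  unfold ball; simpl; unfold AbsRing_ball, abs, minus, plus, opp; simpl. apply P; auto.
Qed.

Lemma cont2_plus F G : cont2 F -> cont2 G -> cont2 (fun t x => F t x + G t x).
Proof.
  intros. apply cont2_of_2d. intros. apply continuity_2d_pt_plus; apply cont2_2d; auto.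
Qed.
Lemma cont2_mult F G : cont2 F -> cont2 G -> cont2 (fun t x => F t x * G t x).
Proof.
  intros. apply cont2_of_2d. intros. apply continuity_2d_pt_mult; apply cont2_2d; auto.
Qed.

Lemma C2_plus n : forall F G, C2 n F -> C2 n G -> C2 n (fun t x => F t x + G t x).
Proof.
  induction n; simpl. apply cont2_plus.
  intros F G [CF [Ft [Fx [H1 [H2 [H3 H4]]]]]] [CG [Gt [Gx [K1 [K2 [K3 K4]]]]]].
  split. apply cont2_plus; auto.
  exists (fun t x => Ft t x + Gt t x), (fun t x => Fx t x + Gx t x).
  repeat split; auto.
  - intros; apply dpl_plus; auto.
  - intros; apply dpl_plus; auto.
Qed.

Lemma C2_mult n : forall F G, C2 n F -> C2 n G -> C2 n (fun t x => F t x * G t x).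
Proof.
  induction n; simpl. apply cont2_mult.
  intros F G HF HG.
  pose proof (C2_S n F HF) as HF'. pose proof (C2_S n G HG) as HG'.
  destruct HF as [CF [Ft [Fx [H1 [H2 [H3 H4]]]]]], HG as [CG [Gt [Gx [K1 [K2 [K3 K4]]]]]].
  split. apply cont2_mult; auto.
  exists (fun t x => Ft t x * G t x + F t x * Gt t x), (fun t x => Fx t x * G t x + F t x * Gx t x).
  repeat split.
  - intros; apply (dpl_mult (fun s => F s x) (fun s => G s x)); auto.
  - intros; apply (dpl_mult (fun y => F t y) (fun y => G t y)); auto.
  - apply C2_plus; apply IHn; auto.
  - apply C2_plus; apply IHn; auto.
Qed.

Lemma C2_const c n : C2 n (fun _ _ => c).
Proof.
  revert c; induction n; intro c; simpl.
  - intros t x eps He. exists 1. split. lra. intros. rewrite Rminus_diag, Rabs_R0; auto.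
  - split. intros t x eps He. exists 1. split. lra. intros. rewrite Rminus_diag, Rabs_R0; auto.
    exists (fun _ _ => 0), (fun _ _ => 0). repeat split; auto; intros; apply dpl_const.
Qed.

Lemma cont2_lift_t v : (forall t, continuity_pt v t) -> cont2 (fun t x => v t).
Proof.
  intros Hv t x eps He.
  pose proof (proj1 (continuity_pt_locally _ _) (Hv t) (mkposreal eps He)) as [d P].
  exists d. split. apply cond_pos. intros s y Hs Hy. apply (P s). apply Hs.
Qed.
Lemma cont2_lift_x v : (forall x, continuity_pt v x) -> cont2 (fun t x => v x).
Proof.
  intros Hv t x eps He.
  pose proof (proj1 (continuity_pt_locally _ _) (Hv x) (mkposreal eps He)) as [d P].
  exists d. split. apply cond_pos. intros s y Hs Hy. apply (P y). apply Hy.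
Qed.

Lemma C2_lift_t n : forall v, smooth v -> C2 n (fun t x => v t).
Proof.
  induction n; intros v Hv; simpl.
  - apply cont2_lift_t. apply sm_cont; auto.
  - split. apply cont2_lift_t. apply sm_cont; auto.
    exists (fun t x => deriv v t), (fun _ _ => 0). repeat split.
    + intros; apply sm_derivable; auto.
    + intros; apply dpl_const.
    + apply (IHn (deriv v)). apply sm_deriv; auto.
    + apply C2_const.
Qed.
Lemma C2_lift_x n : forall v, smooth v -> C2 n (fun t x => v x).
Proof.
  induction n; intros v Hv; simpl.
  - apply cont2_lift_x. apply sm_cont; auto.
  - split. apply cont2_lift_x. apply sm_cont; auto.
    exists (fun _ _ => 0), (fun t x => deriv v x). repeat split.
    + intros; apply dpl_const.
    + intros; apply sm_derivable; auto.
    + apply C2_const.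
    + apply (IHn (deriv v)). apply sm_deriv; auto.
Qed.

Lemma DPn_cont phi y : DPn 1 phi -> 0 < y -> continuity_pt phi y.
Proof.
  intros [f' [H _]] Hy. apply derivable_continuous_pt. exists (f' y). apply H; auto.
Qed.

Lemma DPn_1 n : forall f, DPn (S n) f -> DPn 1 f.
Proof. induction n; auto. intros f H. apply IHn. apply DPn_S; auto. Qed.

Lemma C2_comp_pos n : forall phi F, DPn (S n) phi -> C2 n F -> (forall t x, 0 < F t x) ->
  C2 n (fun t x => phi (F t x)).
Proof.
  induction n; intros phi F Hphi HF Hpos.
  - simpl. apply cont2_comp'; auto. intros; apply DPn_cont; auto.
  - assert (HF' := C2_S n F HF).
    assert (Hphi1: DPn 1 phi) by (apply DPn_1 with (S n); auto).
    destruct Hphi as [phi' [Hd Hphi']].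
    destruct HF as [CF [Ft [Fx [H1 [H2 [H3 H4]]]]]].
    split. apply cont2_comp'; auto. intros; apply DPn_cont; auto.
    exists (fun t x => phi' (F t x) * Ft t x), (fun t x => phi' (F t x) * Fx t x).
    repeat split.
    + intros. apply (dpl_comp phi (fun s => F s x)); auto.
    + intros. apply (dpl_comp phi (fun y => F t y)); auto.
    + apply C2_mult; auto.
    + apply C2_mult; auto.
Qed.

Definition Dt (F : R -> R -> R) := fun t x => deriv (fun s => F s x) t.
Definition Dx (F : R -> R -> R) := fun t x => deriv (fun y => F t y) x.

Definition Cl F := forall n, C2 n F.

Lemma Cl_cont F : Cl F -> cont2 F.
Proof. intro H; apply (C2_cont 0), H. Qed.

Lemma Cl_dt F : Cl F -> forall t x, derivable_pt_lim (fun s => F s x) t (Dt F t x).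
Proof.
  intros H t x. destruct (H 1%nat) as [_ [Ft [Fx [H1 _]]]].
  unfold Dt. rewrite (deriv_eq _ _ _ (H1 t x)); auto.
Qed.
Lemma Cl_dx F : Cl F -> forall t x, derivable_pt_lim (fun y => F t y) x (Dx F t x).
Proof.
  intros H t x. destruct (H 1%nat) as [_ [Ft [Fx [_ [H2 _]]]]].
  unfold Dx. rewrite (deriv_eq _ _ _ (H2 t x)); auto.
Qed.

Lemma Cl_Dt F : Cl F -> Cl (Dt F).
Proof.
  intros H n. destruct (H (S n)) as [_ [Ft [Fx [H1 [_ [H3 _]]]]]].
  replace (Dt F) with Ft; auto.
  apply functional_extensionality; intro t; apply functional_extensionality; intro x.
  unfold Dt. symmetry; apply deriv_eq; auto.
Qed.
Lemma Cl_Dx F : Cl F -> Cl (Dx F).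
Proof.
  intros H n. destruct (H (S n)) as [_ [Ft [Fx [_ [H2 [_ H4]]]]]].
  replace (Dx F) with Fx; auto.
  apply functional_extensionality; intro t; apply functional_extensionality; intro x.
  unfold Dx. symmetry; apply deriv_eq; auto.
Qed.

Lemma Derive_deriv f x l : derivable_pt_lim f x l -> Derive f x = deriv f x.
Proof. intro H. rewrite (deriv_eq _ _ _ H). apply is_derive_unique, is_derive_Reals; auto. Qed.

Lemma Cl_schwarz K : Cl K -> Dx (Dt K) = Dt (Dx K).
Proof.
  intros HK.
  assert (Ht := Cl_dt K HK). assert (Hx := Cl_dx K HK).
  assert (Htx := Cl_dx (Dt K) (Cl_Dt K HK)). assert (Hxt := Cl_dt (Dx K) (Cl_Dx K HK)).
  apply functional_extensionality; intro t; apply functional_extensionality; intro x.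
  assert (E1: forall z v, Derive (fun s => K s v) z = Dt K z v) by (intros; eapply Derive_deriv; apply Ht).
  assert (E2: forall z v, Derive (fun y => K z y) v = Dx K z v) by (intros; eapply Derive_deriv; apply Hx).
  pose proof (Schwarz K t x) as S.
  assert (E3: (fun z => Derive (fun y => K z y) x) = (fun z => Dx K z x)) by (apply functional_extensionality; auto).
  assert (E4: (fun z => Derive (fun s => K s z) t) = (fun z => Dt K t z)) by (apply functional_extensionality; auto).
  rewrite E3, E4 in S.
  rewrite (Derive_deriv _ _ _ (Hxt t x)) in S. rewrite (Derive_deriv _ _ _ (Htx t x)) in S.
  unfold Dx at 1, Dt at 1. symmetry. apply S.
  - exists (mkposreal 1 Rlt_0_1). intros u v _ _. repeat split.
    + exists (Dt K u v); apply is_derive_Reals; auto.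
    + exists (Dx K u v); apply is_derive_Reals; auto.
    + apply (ex_derive_ext (fun z => Dx K z v)). intro; symmetry; auto.
      exists (Dt (Dx K) u v); apply is_derive_Reals; auto.
    + apply (ex_derive_ext (fun z => Dt K u z)). intro; symmetry; auto.
      exists (Dx (Dt K) u v); apply is_derive_Reals; auto.
  - apply continuity_2d_pt_ext with (Dt (Dx K)).
    { intros u v. rewrite (Derive_ext (fun z => Derive (fun y => K z y) v) (fun z => Dx K z v)) by auto.
      symmetry; eapply Derive_deriv; eauto. }
    apply cont2_2d. apply Cl_cont. apply Cl_Dt, Cl_Dx; auto.
  - apply continuity_2d_pt_ext with (Dx (Dt K)).
    { intros u v. rewrite (Derive_ext (fun z => Derive (fun s => K s z) u) (fun z => Dt K u z)) by auto.
      symmetry; eapply Derive_deriv; eauto. }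
    apply cont2_2d. apply Cl_cont. apply Cl_Dx, Cl_Dt; auto.
Qed.

Lemma Cl_iter_Dt i : forall F, Cl F -> Cl (Nat.iter i Dt F).
Proof. induction i; simpl; auto. intros; apply Cl_Dt; auto. Qed.

Lemma Dx_iter_Dt i : forall H, Cl H -> Dx (Nat.iter i Dt H) = Nat.iter i Dt (Dx H).
Proof.
  induction i; simpl; auto. intros H HH.
  rewrite Cl_schwarz by (apply Cl_iter_Dt; auto). rewrite IHi; auto.
Qed.

Lemma Cl_iter_Dx j : forall F, Cl F -> Cl (Nat.iter j Dx F).
Proof. induction j; simpl; auto. intros; apply Cl_Dx; auto. Qed.

Lemma Cl_smooth2 F : Cl F -> smooth2 F.
Proof.
  intros HF. exists (fun i j => Nat.iter i Dt (Nat.iter j Dx F)).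
  split; [reflexivity|]. split; [|split].
  - intros i j t x. simpl. apply Cl_dt. apply Cl_iter_Dt, Cl_iter_Dx; auto.
  - intros i j t x. simpl. rewrite <- Dx_iter_Dt by (apply Cl_iter_Dx; auto).
    apply Cl_dx. apply Cl_iter_Dt, Cl_iter_Dx; auto.
  - intros i j. apply Cl_cont. apply Cl_iter_Dt, Cl_iter_Dx; auto.
Qed.

Lemma exp_le a b : a <= b -> exp a <= exp b.
Proof. intros [H|H]. left; apply exp_increasing; auto. subst; lra. Qed.

Lemma Rpower_le_neg c x y : c <= 0 -> 0 < x <= y -> Rpower y c <= Rpower x c.
Proof.
  intros Hc [Hx Hxy]. unfold Rpower. apply exp_le.
  destruct Hxy as [Hxy|Hxy]. pose proof (ln_increasing x y Hx Hxy). nra. subst; lra.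
Qed.

Lemma rpow_mult x y c : 0 < c -> 0 <= x -> 0 <= y -> rpow (x * y) c = rpow x c * rpow y c.
Proof.
  intros Hc [Hx|Hx] [Hy|Hy].
  - rewrite !rpow_pos by (try apply Rmult_lt_0_compat; auto). rewrite Rpower_mult_distr; auto.
  - subst. rewrite Rmult_0_r, !(rpow_le0 0) by lra. ring.
  - subst. rewrite Rmult_0_l, !(rpow_le0 0) by lra. ring.
  - subst. rewrite Rmult_0_l, !(rpow_le0 0) by lra. ring.
Qed.

Lemma subadd u v r : 0 < r <= 1 -> 0 <= u -> 0 <= v -> rpow (u + v) r <= rpow u r + rpow v r.
Proof.
  intros Hr [Hu|Hu] [Hv|Hv].
  - rewrite !rpow_pos by lra.
    assert (E: forall w, 0 < w -> Rpower w r = w * Rpower w (r - 1)).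
    { intros w Hw. rewrite Rmult_comm. rewrite Rpower_q_1; auto. }
    rewrite (E (u+v)), (E u), (E v) by lra.
    assert (Rpower (u+v) (r-1) <= Rpower u (r-1)) by (apply Rpower_le_neg; lra).
    assert (Rpower (u+v) (r-1) <= Rpower v (r-1)) by (apply Rpower_le_neg; lra).
    nra.
  - subst. rewrite Rplus_0_r, (rpow_le0 0); lra.
  - subst. rewrite Rplus_0_l, (rpow_le0 0); lra.
  - subst. rewrite Rplus_0_l, (rpow_le0 0); lra.
Qed.

Lemma ptwise_bound al be sg q : 1 <= q -> 0 < al -> 0 < be -> 0 < sg < 1 ->
  rpow (Rabs (be - al)) q * Rpower (al + sg * (be - al)) (1 - q)
  <= Rpower sg (1 - q) * be + Rpower (1 - sg) (1 - q) * al.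
Proof.
  intros Hq Ha Hb Hs.
  pose proof (Rpower_pos sg (1-q)). pose proof (Rpower_pos (1 - sg) (1-q)).
  pose proof (Rpower_pos (al + sg * (be - al)) (1 - q)).
  destruct (Rle_dec al be).
  - assert (E1: rpow (Rabs (be - al)) q <= Rpower be q).
    { rewrite <- (rpow_pos be) by auto. apply rpow_mono. lra. rewrite Rabs_pos_eq; lra. }
    assert (E2: Rpower (al + sg * (be - al)) (1 - q) <= Rpower (sg * be) (1 - q)).
    { apply Rpower_le_neg. lra. split. apply Rmult_lt_0_compat; lra. nra. }
    assert (E3: Rpower be q * Rpower (sg * be) (1 - q) = Rpower sg (1 - q) * be).
    { rewrite <- Rpower_mult_distr by lra. 
      replace (Rpower be q * (Rpower sg (1 - q) * Rpower be (1 - q))) with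
        (Rpower sg (1 - q) * (Rpower be q * Rpower be (1 - q))) by ring.
      rewrite <- Rpower_plus. replace (q + (1 - q)) with 1 by ring. rewrite Rpower_1; auto. }
    assert (0 <= rpow (Rabs (be - al)) q) by apply rpow_ge0.
    assert (rpow (Rabs (be - al)) q * Rpower (al + sg * (be - al)) (1 - q) <= Rpower be q * Rpower (sg * be) (1 - q)).
    { apply Rmult_le_compat; auto; lra. }
    assert (0 <= Rpower (1 - sg) (1 - q) * al) by (apply Rmult_le_pos; lra). lra.
  - assert (E1: rpow (Rabs (be - al)) q <= Rpower al q).
    { rewrite <- (rpow_pos al) by auto. apply rpow_mono. lra. rewrite Rabs_left; lra. }
    assert (E2: Rpower (al + sg * (be - al)) (1 - q) <= Rpower ((1 - sg) * al) (1 - q)).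
    { apply Rpower_le_neg. lra. split. apply Rmult_lt_0_compat; lra. nra. }
    assert (E3: Rpower al q * Rpower ((1 - sg) * al) (1 - q) = Rpower (1 - sg) (1 - q) * al).
    { rewrite <- Rpower_mult_distr by lra. 
      replace (Rpower al q * (Rpower (1 - sg) (1 - q) * Rpower al (1 - q))) with
        (Rpower (1 - sg) (1 - q) * (Rpower al q * Rpower al (1 - q))) by ring.
      rewrite <- Rpower_plus. replace (q + (1 - q)) with 1 by ring. rewrite Rpower_1; auto. }
    assert (0 <= rpow (Rabs (be - al)) q) by apply rpow_ge0.
    assert (rpow (Rabs (be - al)) q * Rpower (al + sg * (be - al)) (1 - q) <= Rpower al q * Rpower ((1 - sg) * al) (1 - q)).
    { apply Rmult_le_compat; auto; lra. }
    assert (0 <= Rpower sg (1 - q) * be) by (apply Rmult_le_pos; lra). lra.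
Qed.

Definition dens (q : R) (f : R -> R) := fun x => Rpower (/ q * f x) q.

Lemma Uq_dens q f : 1 <= q -> Uq q f ->
  smooth (dens q f) /\ (forall x, 0 < dens q f x) /\ (forall x, dens q f (x + 1) = dens q f x) /\
  RInt (dens q f) 0 1 = 1 /\ (forall x, f x = q * Rpower (dens q f x) (/ q)).
Proof.
  intros Hq [[Hs Hper] [Hpos Hn]].
  set (a := dens q f).
  assert (Ha_pos: forall x, 0 < a x) by (intro; apply Rpower_pos).
  assert (Ha_sm: smooth a).
  { apply sm_Rpower. apply sm_scal; auto. intro x. apply Rmult_lt_0_compat; auto. apply Rinv_0_lt_compat; lra. }
  assert (Ha_c: forall x, continuity_pt a x) by (apply sm_cont; auto).
  assert (Ha_per: forall x, a (x + 1) = a x) by (intro; unfold a, dens; rewrite Hper; auto).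
  split; auto. split; auto. split; auto. split.
  { apply Lqnorm_q in Hn; [|lra].
    assert (E: forall x, rpow (Rabs (f x)) q = Rpower q q * a x).
    { intro x. rewrite Rabs_pos_eq by (left; auto). rewrite rpow_pos by auto. unfold a, dens.
      rewrite Rpower_mult_distr. f_equal. field. lra. lra.
      apply Rmult_lt_0_compat; auto. apply Rinv_0_lt_compat; lra. }
    rewrite (functional_extensionality _ _ E) in Hn.
    rewrite int01_RInt in Hn. rewrite RInt_scal' in Hn.
    apply Rmult_eq_reg_l with (Rpower q q). rewrite Hn; ring.
    apply Rgt_not_eq, Rpower_pos.
    apply exRInt_all; auto. apply exRInt_all. intro. apply continuity_pt_mult; auto. apply continuity_pt_const; intros ? ?; auto. }
  intro x. unfold a, dens.
  rewrite Rpower_mult, Rinv_r, Rpower_1 by (try lra; apply Rmult_lt_0_compat; auto; apply Rinv_0_lt_compat; lra).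
  field. lra.
Qed.

Definition sfun t := (1 - cos (PI * t)) / 2.
Definition sd t := PI / 2 * sin (PI * t).

Lemma sfun_range t : 0 <= sfun t <= 1.
Proof. unfold sfun. pose proof (COS_bound (PI * t)). lra. Qed.

Lemma sfun_open t : 0 < t < 1 -> 0 < sfun t < 1.
Proof.
  intro Ht. pose proof PI_RGT_0. unfold sfun.
  assert (cos (PI * t) < cos 0). { apply cos_decreasing_1; try lra. nra. nra. nra. }
  assert (cos PI < cos (PI * t)). { apply cos_decreasing_1; try lra. nra. nra. nra. }
  rewrite cos_0 in *. rewrite cos_PI in *. lra.
Qed.

Lemma sfun_0 : sfun 0 = 0.
Proof. unfold sfun. rewrite Rmult_0_r, cos_0. lra. Qed.
Lemma sfun_1 : sfun 1 = 1.
Proof. unfold sfun. rewrite Rmult_1_r, cos_PI. lra. Qed.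

Lemma sfun_der t : derivable_pt_lim sfun t (sd t).
Proof.
  unfold sfun, sd.
  apply dpl_val with ((0 - (- sin (PI * t)) * (0 * t + PI * 1)) * / 2 + (1 - cos (PI * t)) * 0).
  field.
  apply (dpl_mult (fun t => 1 - cos (PI * t)) (fun _ => / 2)); [|apply dpl_const].
  apply derivable_pt_lim_minus. apply dpl_const.
  apply (dpl_comp cos (fun t => PI * t)). 
  apply (dpl_mult (fun _ => PI) (fun t => t)). apply dpl_const. apply dpl_id.
  apply derivable_pt_lim_cos.
Qed.

Lemma sm_sfun : smooth sfun.
Proof.
  unfold sfun. apply sm_ext with (fun t => / 2 * (1 - cos (PI * t))). intro; field.
  apply sm_scal. apply sm_minus. apply sm_const. apply (sm_comp cos (fun t => PI * t)). apply sm_cos.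
  apply sm_scal, sm_id.
Qed.

Lemma sd_nonneg t : 0 <= t <= 1 -> 0 <= sd t.
Proof. intro. pose proof PI_RGT_0. unfold sd. apply Rmult_le_pos. lra. apply sin_ge_0; nra. Qed.

Lemma sd_cont t : continuity_pt sd t.
Proof.
  unfold sd. apply cont_mult. apply cont_const. apply (cont_comp sin (fun t => PI * t)).
  apply cont_mult. apply cont_const. apply continuity_pt_id. apply continuity_sin.
Qed.

Lemma DPn_Rpower1 n c : DPn n (fun z => Rpower z c).
Proof.
  replace (fun z => Rpower z c) with (fun z => 1 * Rpower z c). apply DPn_Rpower.
  apply functional_extensionality; intro; ring.
Qed.

Lemma RInt_lin2 (u v : R -> R) c : ex_RInt u 0 1 -> ex_RInt v 0 1 ->
  RInt (fun x => u x + c * (v x - u x)) 0 1 = RInt u 0 1 + c * (RInt v 0 1 - RInt u 0 1).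
Proof.
  intros Hu Hv.
  assert (E: RInt (fun x => u x + c * (v x - u x)) 0 1 = RInt u 0 1 + RInt (fun x => c * (v x - u x)) 0 1).
  { apply (@RInt_plus R_CompleteNormedModule); auto.
    apply (@ex_RInt_scal R_CompleteNormedModule). apply (@ex_RInt_minus R_CompleteNormedModule); auto. }
  rewrite E, RInt_scal', RInt_minus'; auto.
  apply (@ex_RInt_minus R_CompleteNormedModule); auto.
Qed.

Section Path.
Variables (q : R) (f g : R -> R).
Hypothesis Hq : 1 <= q.
Hypothesis Hf : Uq q f.
Hypothesis Hg : Uq q g.

Definition pa := dens q f.
Definition pb := dens q g.
Definition Mp t x := pa x + sfun t * (pb x - pa x).
Definition Fp t x := q * Rpower (Mp t x) (/ q).
Definition Ig t x := rpow (Rabs (pb x - pa x)) q * Rpower (Mp t x) (1 - q).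
Definition Nn t := RInt (fun x => Ig t x) 0 1.
Definition Lt t := sd t * rpow (Nn t) (/ q).

Lemma pa_props : smooth pa /\ (forall x, 0 < pa x) /\ (forall x, pa (x + 1) = pa x) /\
  RInt pa 0 1 = 1 /\ (forall x, f x = q * Rpower (pa x) (/ q)).
Proof. apply Uq_dens; auto. Qed.
Lemma pb_props : smooth pb /\ (forall x, 0 < pb x) /\ (forall x, pb (x + 1) = pb x) /\
  RInt pb 0 1 = 1 /\ (forall x, g x = q * Rpower (pb x) (/ q)).
Proof. apply Uq_dens; auto. Qed.

Lemma Mp_pos t x : 0 < Mp t x.
Proof.
  destruct pa_props as [_ [Ha _]]. destruct pb_props as [_ [Hb _]].
  pose proof (sfun_range t). pose proof (Ha x). pose proof (Hb x). unfold Mp.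
  replace (pa x + sfun t * (pb x - pa x)) with ((1 - sfun t) * pa x + sfun t * pb x) by ring.
  destruct (Req_dec (sfun t) 1) as [E|E].
  - rewrite E. lra.
  - assert (0 < (1 - sfun t) * pa x) by (apply Rmult_lt_0_compat; lra).
    assert (0 <= sfun t * pb x) by (apply Rmult_le_pos; lra). lra.
Qed.

Lemma Mp_C2 n : C2 n Mp.
Proof.
  destruct pa_props as [Sa _]. destruct pb_props as [Sb _].
  unfold Mp. apply (C2_plus n (fun t x => pa x) (fun t x => sfun t * (pb x - pa x))).
  apply C2_lift_x; auto.
  apply (C2_mult n (fun t x => sfun t) (fun t x => pb x - pa x)).
  apply C2_lift_t, sm_sfun. apply (C2_lift_x n (fun x => pb x - pa x)). apply sm_minus; auto.
Qed.

Lemma Fp_Cl : Cl Fp.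
Proof.
  intro n. unfold Fp. apply (C2_mult n (fun _ _ => q) (fun t x => Rpower (Mp t x) (/ q))).
  apply C2_const. apply (C2_comp_pos n (fun z => Rpower z (/ q)) Mp). apply DPn_Rpower1.
  apply Mp_C2. apply Mp_pos.
Qed.

Lemma Fp_Uq t : Uq q (Fp t).
Proof.
  destruct pa_props as [Sa [Ha [Pa [Ia _]]]]. destruct pb_props as [Sb [Hb [Pb [Ib _]]]].
  assert (SM: smooth (Mp t)).
  { unfold Mp. apply sm_plus; auto. apply sm_scal. apply sm_minus; auto. }
  split; [split|split].
  - unfold Fp. apply sm_scal. apply sm_Rpower; auto. intro; apply Mp_pos.
  - intro x. unfold Fp, Mp. rewrite Pa, Pb. auto.
  - intro x. unfold Fp. apply Rmult_lt_0_compat. lra. apply Rpower_pos.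
  - apply Lqnorm_q'. lra.
    assert (E: forall x, rpow (Rabs (Fp t x)) q = Rpower q q * Mp t x).
    { intro x. unfold Fp. pose proof (Rpower_pos (Mp t x) (/ q)). pose proof (Mp_pos t x).
      rewrite Rabs_pos_eq by (apply Rmult_le_pos; lra).
      rewrite rpow_pos by (apply Rmult_lt_0_compat; lra).
      rewrite <- Rpower_mult_distr by lra. rewrite Rpower_mult, Rinv_l, Rpower_1 by lra. auto. }
    rewrite (functional_extensionality _ _ E).
    rewrite int01_RInt. rewrite RInt_scal'. unfold Mp.
    rewrite RInt_lin2 by (apply sm_exRInt; auto). rewrite Ia, Ib. ring.
    apply sm_exRInt; auto. apply sm_exRInt. apply sm_scal. auto.
Qed.

Lemma Fp_0 x : Fp 0 x = f x.
Proof.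
  destruct pa_props as [_ [_ [_ [_ E]]]]. unfold Fp, Mp. rewrite sfun_0, E. f_equal. f_equal. ring.
Qed.
Lemma Fp_1 x : Fp 1 x = g x.
Proof.
  destruct pb_props as [_ [_ [_ [_ E]]]]. unfold Fp, Mp. rewrite sfun_1, E. f_equal. f_equal. ring.
Qed.

Lemma Fp_path : Uq_path q f g Fp.
Proof.
  split. apply Cl_smooth2, Fp_Cl. split. intros; apply Fp_Uq. split. apply Fp_0. apply Fp_1.
Qed.

Lemma Fp_der t x : derivable_pt_lim (fun s => Fp s x) t (Rpower (Mp t x) (/ q - 1) * (sd t * (pb x - pa x))).
Proof.
  unfold Fp.
  apply dpl_val with (0 * Rpower (Mp t x) (/ q) + q * ((/ q * Rpower (Mp t x) (/ q - 1)) * (0 + (sd t * (pb x - pa x) + sfun t * 0)))).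
  { field. lra. }
  apply (dpl_mult (fun _ => q) (fun s => Rpower (Mp s x) (/ q))). apply dpl_const.
  apply (dpl_comp (fun z => Rpower z (/ q)) (fun s => Mp s x)).
  - unfold Mp. apply dpl_plus. apply dpl_const.
    apply (dpl_mult sfun (fun _ => pb x - pa x)). apply sfun_der. apply dpl_const.
  - apply derivable_pt_lim_power. apply Mp_pos.
Qed.

Lemma integrand_cont : cont2 Ig.
Proof.
  unfold Ig. destruct pa_props as [Sa _]. destruct pb_props as [Sb _].
  apply cont2_mult.
  - apply (cont2_lift_x (fun x => rpow (Rabs (pb x - pa x)) q)). intro. apply cont_rpow. lra.
    apply cont_abs. apply cont_minus; apply sm_cont; auto.
  - apply (C2_cont 0). apply (C2_comp_pos 0 (fun z => Rpower z (1 - q)) Mp). apply DPn_Rpower1.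
    apply Mp_C2. apply Mp_pos.
Qed.

Lemma Nn_nonneg t : 0 <= Nn t.
Proof.
  unfold Nn. apply RInt_ge_0. lra. apply exRInt_all. intro. apply (cont2_slice1 Ig), integrand_cont.
  intros. unfold Ig. apply Rmult_le_pos. apply rpow_ge0. left; apply Rpower_pos.
Qed.

Lemma Lt_cont t : continuity_pt Lt t.
Proof.
  unfold Lt. apply cont_mult. apply sd_cont. apply cont_rpow. apply Rinv_0_lt_compat; lra.
  unfold Nn. apply param_cont. apply integrand_cont.
Qed.

Lemma Lq_eq t : 0 <= t <= 1 -> Lqnorm q (fun x => deriv (fun s => Fp s x) t) = Lt t.
Proof.
  intro Ht. pose proof (sd_nonneg t Ht) as Hsd.
  assert (E: forall x, rpow (Rabs (deriv (fun s => Fp s x) t)) q =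
     rpow (sd t) q * Ig t x).
  { intro x. unfold Ig. rewrite (deriv_eq _ _ _ (Fp_der t x)).
    rewrite !Rabs_mult. rewrite (Rabs_pos_eq (Rpower _ _)) by (left; apply Rpower_pos).
    rewrite (Rabs_pos_eq (sd t)) by auto.
    rewrite rpow_mult by (try lra; try (left; apply Rpower_pos); apply Rmult_le_pos; auto; apply Rabs_pos).
    rewrite rpow_mult by (try lra; auto; apply Rabs_pos).
    rewrite rpow_pos by apply Rpower_pos. rewrite Rpower_mult.
    replace ((/ q - 1) * q) with (1 - q) by (field; lra). ring. }
  unfold Lqnorm. rewrite (functional_extensionality _ _ E).
  rewrite int01_RInt. rewrite RInt_scal'. fold (Nn t).
  rewrite rpow_mult by (try apply Rinv_0_lt_compat; try lra; try apply rpow_ge0; apply Nn_nonneg).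
  unfold Lt. f_equal.
  destruct Hsd as [Hsd|Hsd]. apply rpow_inv; auto. lra.
  rewrite <- Hsd. rewrite (rpow_le0 0) by lra. apply rpow_le0; lra.
  apply exRInt_all. intro. apply (cont2_slice1 Ig), integrand_cont.
  apply exRInt_all. intro. apply cont_mult. apply cont_const. apply (cont2_slice1 Ig), integrand_cont.
Qed.

Lemma Fp_length : path_length q Fp = RInt Lt 0 1.
Proof.
  unfold path_length. rewrite int01_RInt.
  - apply RInt_ext. intros x Hx. rewrite Rmin_left, Rmax_right in Hx by lra. apply Lq_eq. lra.
  - apply ex_RInt_ext with Lt. intros x Hx. rewrite Rmin_left, Rmax_right in Hx by lra. symmetry; apply Lq_eq. lra.
    apply exRInt_all. apply Lt_cont.
Qed.

End Path.

Lemma Rpower_cont c z : 0 < z -> continuity_pt (fun y => Rpower y c) z.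
Proof. intro. apply derivable_continuous_pt. exists (c * Rpower z (c - 1)). apply derivable_pt_lim_power; auto. Qed.

Lemma RInt_const' (c a b : R) : RInt (fun _ => c) a b = (b - a) * c.
Proof. rewrite RInt_const. reflexivity. Qed.

Lemma Rpower_le_1 s c : 0 < s <= 1 -> 0 <= c -> Rpower s c <= 1.
Proof. intros. assert (E: Rpower 1 c = 1) by (unfold Rpower; rewrite ln_1, Rmult_0_r, exp_0; auto).
  rewrite <- E. apply Rle_Rpower_l; lra. Qed.

Section Bound.
Variables (q : R) (f g : R -> R).
Hypothesis Hq : 1 <= q.
Hypothesis Hf : Uq q f.
Hypothesis Hg : Uq q g.

Lemma Nn_bound t : 0 < t < 1 ->
  Nn q f g t <= Rpower (sfun t) (1 - q) + Rpower (1 - sfun t) (1 - q).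
Proof.
  intro Ht. pose proof (sfun_open t Ht) as Hs.
  destruct (pa_props q f Hq Hf) as [Sa [Ha [_ [Ia _]]]]. destruct (pb_props q g Hq Hg) as [Sb [Hb [_ [Ib _]]]].
  unfold Nn.
  apply Rle_trans with (RInt (fun x => Rpower (sfun t) (1 - q) * pb q g x + Rpower (1 - sfun t) (1 - q) * pa q f x) 0 1).
  - apply RInt_le. lra. apply exRInt_all. intro. apply (cont2_slice1 (Ig q f g)), integrand_cont; auto.
    apply exRInt_all. intro. apply cont_plus; apply cont_mult; try apply cont_const; apply sm_cont; auto.
    intros x _. unfold Ig, Mp. apply ptwise_bound; auto.
  - right.
    assert (E: RInt (fun x => Rpower (sfun t) (1 - q) * pb q g x + Rpower (1 - sfun t) (1 - q) * pa q f x) 0 1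
       = RInt (fun x => Rpower (sfun t) (1 - q) * pb q g x) 0 1 + RInt (fun x => Rpower (1 - sfun t) (1 - q) * pa q f x) 0 1).
    { apply (@RInt_plus R_CompleteNormedModule); apply (@ex_RInt_scal R_CompleteNormedModule); apply sm_exRInt; auto. }
    rewrite E, !RInt_scal', Ia, Ib by (apply sm_exRInt; auto). ring.
Qed.

Definition Pd t := sd t * (Rpower (sfun t) (/ q - 1) + Rpower (1 - sfun t) (/ q - 1)).
Definition Pp t := q * Rpower (sfun t) (/ q) - q * Rpower (1 - sfun t) (/ q).

Lemma Lt_le_Pd t : 0 < t < 1 -> Lt q f g t <= Pd t.
Proof.
  intro Ht. pose proof (sfun_open t Ht) as Hs.
  unfold Lt, Pd. apply Rmult_le_compat_l. apply sd_nonneg; lra.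
  assert (Hr: 0 < / q <= 1). { split. apply Rinv_0_lt_compat; lra. rewrite <- Rinv_1. apply Rinv_le_contravar; lra. }
  apply Rle_trans with (rpow (Rpower (sfun t) (1 - q) + Rpower (1 - sfun t) (1 - q)) (/ q)).
  apply rpow_mono. lra. apply Nn_bound; auto.
  eapply Rle_trans. apply subadd; auto; left; apply Rpower_pos.
  rewrite !rpow_pos by apply Rpower_pos. rewrite !Rpower_mult.
  replace ((1 - q) * / q) with (/ q - 1) by (field; lra). lra.
Qed.

Lemma Pp_der t : 0 < t < 1 -> is_derive Pp t (Pd t).
Proof.
  intro Ht. pose proof (sfun_open t Ht) as Hs. apply is_derive_Reals. unfold Pp, Pd.
  apply dpl_val with (q * (/ q * Rpower (sfun t) (/ q - 1) * sd t) - q * (/ q * Rpower (1 - sfun t) (/ q - 1) * (0 - sd t))).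
  { field. lra. }
  apply derivable_pt_lim_minus.
  - apply dpl_val with (0 * Rpower (sfun t) (/q) + q * (/ q * Rpower (sfun t) (/ q - 1) * sd t)). ring.
    apply (dpl_mult (fun _ => q) (fun t => Rpower (sfun t) (/ q))). apply dpl_const.
    apply (dpl_comp (fun z => Rpower z (/ q)) sfun). apply sfun_der. apply derivable_pt_lim_power; lra.
  - apply dpl_val with (0 * Rpower (1 - sfun t) (/q) + q * (/ q * Rpower (1 - sfun t) (/ q - 1) * (0 - sd t))). ring.
    apply (dpl_mult (fun _ => q) (fun t => Rpower (1 - sfun t) (/ q))). apply dpl_const.
    apply (dpl_comp (fun z => Rpower z (/ q)) (fun t => 1 - sfun t)).
    apply derivable_pt_lim_minus. apply dpl_const. apply sfun_der. apply derivable_pt_lim_power; lra.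
Qed.

Lemma Pd_cont t : 0 < t < 1 -> continuity_pt Pd t.
Proof.
  intro Ht. pose proof (sfun_open t Ht) as Hs. unfold Pd. apply cont_mult. apply sd_cont.
  apply cont_plus.
  - apply (cont_comp (fun z => Rpower z (/ q - 1)) sfun). apply sm_cont, sm_sfun. apply Rpower_cont; lra.
  - apply (cont_comp (fun z => Rpower z (/ q - 1)) (fun t => 1 - sfun t)).
    apply cont_minus. apply cont_const. apply sm_cont, sm_sfun. apply Rpower_cont; lra.
Qed.

Lemma middle_bound e : 0 < e < 1/2 -> RInt (Lt q f g) e (1 - e) <= 2 * q.
Proof.
  intro He.
  assert (Hint: RInt Pd e (1 - e) = Pp (1 - e) - Pp e).
  { apply (@is_RInt_unique R_CompleteNormedModule).
    apply (@is_RInt_derive R_CompleteNormedModule Pp Pd).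
    - intros x Hx. rewrite Rmin_left, Rmax_right in Hx by lra. apply Pp_der. lra.
    - intros x Hx. rewrite Rmin_left, Rmax_right in Hx by lra. apply cont_continuous, Pd_cont. lra. }
  apply Rle_trans with (RInt Pd e (1 - e)).
  - apply RInt_le. lra. apply exRInt_all. apply Lt_cont; auto.
    apply cont_exRInt. lra. intros; apply Pd_cont; lra.
    intros x Hx. apply Lt_le_Pd; lra.
  - rewrite Hint. unfold Pp.
    pose proof (sfun_open e ltac:(lra)). pose proof (sfun_open (1 - e) ltac:(lra)).
    assert (Rpower (sfun (1 - e)) (/ q) <= 1) by (apply Rpower_le_1; [lra| left; apply Rinv_0_lt_compat; lra]).
    pose proof (Rpower_pos (1 - sfun (1 - e)) (/ q)). pose proof (Rpower_pos (sfun e) (/ q)).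
    assert (Rpower (1 - sfun e) (/ q) <= 1) by (apply Rpower_le_1; [lra| left; apply Rinv_0_lt_compat; lra]).
    nra.
Qed.

Lemma Lt_nonneg t : 0 <= t <= 1 -> 0 <= Lt q f g t.
Proof. intro. unfold Lt. apply Rmult_le_pos. apply sd_nonneg; auto. apply rpow_ge0. Qed.

Lemma length_bound : RInt (Lt q f g) 0 1 <= 4 * q.
Proof.
  destruct (continuity_ab_maj (Lt q f g) 0 1) as [m [Hm Hm01]]. lra. intros; apply Lt_cont; auto.
  set (B := Lt q f g m). assert (HB: 0 <= B) by (apply Lt_nonneg; auto).
  set (e := Rmin (1/4) (q / (B + 1))).
  assert (He: 0 < e <= 1/4). { unfold e. split. apply Rmin_pos. lra. apply Rdiv_lt_0_compat; lra. apply Rmin_l. }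
  assert (HeB: e * B <= q).
  { apply Rle_trans with (q / (B + 1) * B). apply Rmult_le_compat_r; auto. apply Rmin_r.
    unfold Rdiv. apply Rle_trans with (q * / (B + 1) * (B + 1)). apply Rmult_le_compat_l. 
    apply Rmult_le_pos. lra. left; apply Rinv_0_lt_compat; lra. lra. right; field; lra. }
  assert (Ex: forall a b, ex_RInt (Lt q f g) a b) by (intros; apply exRInt_all; apply Lt_cont; auto).
  assert (C1: RInt (Lt q f g) 0 e + RInt (Lt q f g) e 1 = RInt (Lt q f g) 0 1) by (apply (@RInt_Chasles R_CompleteNormedModule); auto).
  assert (C2: RInt (Lt q f g) e (1 - e) + RInt (Lt q f g) (1 - e) 1 = RInt (Lt q f g) e 1) by (apply (@RInt_Chasles R_CompleteNormedModule); auto).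
  assert (B1: RInt (Lt q f g) 0 e <= e * B).
  { apply Rle_trans with (RInt (fun _ => B) 0 e). apply RInt_le; auto. lra. apply (@ex_RInt_const R_CompleteNormedModule).
    intros; apply Hm; lra. rewrite RInt_const'. lra. }
  assert (B2: RInt (Lt q f g) (1 - e) 1 <= e * B).
  { apply Rle_trans with (RInt (fun _ => B) (1 - e) 1). apply RInt_le; auto. lra. apply (@ex_RInt_const R_CompleteNormedModule).
    intros; apply Hm; lra. rewrite RInt_const'. lra. }
  pose proof (middle_bound e ltac:(lra)). lra.
Qed.

End Bound.

Definition dl (q : R) := / (16 * q).
Definition KK (q : R) := 8 * q / dl q.
Definition s2 x := sin (2 * PI * x).
Definition ww q x := KK q * s2 x / sqrt (1 + (KK q * s2 x) ^ 2).
Definition uu q x := (1 + ww q x) / 2.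
Definition vv q x := (1 - ww q x) / 2.

Lemma s2_per x : s2 (x + 1) = s2 x.
Proof. unfold s2. replace (2 * PI * (x + 1)) with (2 * PI * x + 2 * PI) by ring.
  rewrite sin_plus, sin_2PI, cos_2PI. ring. Qed.
Lemma s2_half x : s2 (x + / 2) = - s2 x.
Proof. unfold s2. replace (2 * PI * (x + / 2)) with (2 * PI * x + PI) by field. apply neg_sin. Qed.

Lemma sm_s2 : smooth s2.
Proof. unfold s2. apply (sm_comp sin (fun x => 2 * PI * x)). apply sm_sin. apply sm_scal, sm_id. Qed.

Lemma ww_alt q x : ww q x = KK q * s2 x * Rpower (1 + (KK q * s2 x) ^ 2) (- / 2).
Proof.
  unfold ww. rewrite Rpower_Ropp, Rpower_sqrt. reflexivity.
  pose proof (pow2_ge_0 (KK q * s2 x)). lra.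
Qed.

Lemma sm_ww q : smooth (ww q).
Proof.
  apply sm_ext with (fun x => KK q * s2 x * Rpower (1 + (KK q * s2 x) ^ 2) (- / 2)).
  intro; rewrite ww_alt; auto.
  apply sm_mult. apply sm_scal, sm_s2.
  apply sm_Rpower. apply sm_plus. apply sm_const.
  apply sm_ext with (fun x => (KK q * s2 x) * (KK q * s2 x)). intro; ring.
  apply sm_mult; apply sm_scal, sm_s2.
  intro x. pose proof (pow2_ge_0 (KK q * s2 x)). lra.
Qed.

Lemma ww_per q x : ww q (x + 1) = ww q x.
Proof. unfold ww. rewrite s2_per. auto. Qed.
Lemma ww_half q x : ww q (x + / 2) = - ww q x.
Proof. unfold ww. rewrite s2_half. replace ((KK q * - s2 x) ^ 2) with ((KK q * s2 x) ^ 2) by ring. field.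
  apply Rgt_not_eq. apply sqrt_lt_R0. pose proof (pow2_ge_0 (KK q * s2 x)). lra. Qed.

Lemma frac_lt1 y : Rabs (y / sqrt (1 + y ^ 2)) < 1.
Proof.
  assert (Hs: 0 < sqrt (1 + y ^ 2)) by (apply sqrt_lt_R0; pose proof (pow2_ge_0 y); lra).
  unfold Rdiv. rewrite Rabs_mult, Rabs_inv, (Rabs_pos_eq (sqrt _)) by lra.
  apply Rmult_lt_reg_r with (sqrt (1 + y ^ 2)); auto.
  rewrite Rmult_assoc, Rinv_l, Rmult_1_r, Rmult_1_l by lra.
  rewrite <- sqrt_Rsqr_abs. apply sqrt_lt_1. apply Rle_0_sqr. pose proof (pow2_ge_0 y); lra.
  unfold Rsqr. simpl. lra.
Qed.

Lemma ww_lt1 q x : Rabs (ww q x) < 1.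
Proof. unfold ww. apply frac_lt1. Qed.

Lemma frac_lb y c : 1 <= c -> 8 * c <= y -> 1 - / (8 * c) <= y / sqrt (1 + y ^ 2).
Proof.
  intros Hc Hy.
  assert (Hy0: 0 < y) by lra.
  assert (Hs: 0 < sqrt (1 + y ^ 2)) by (apply sqrt_lt_R0; pose proof (pow2_ge_0 y); lra).
  assert (S: sqrt (1 + y ^ 2) <= y + / (2 * y)).
  { rewrite <- (sqrt_pow2 (y + / (2 * y))). apply sqrt_le_1. pose proof (pow2_ge_0 y); lra.
    apply pow2_ge_0. replace ((y + / (2 * y)) ^ 2) with (y ^ 2 + 1 + / (4 * y^2)) by (field; lra).
    assert (0 < / (4 * y ^ 2)) by (apply Rinv_0_lt_compat; nra). lra.
    assert (0 < / (2 * y)) by (apply Rinv_0_lt_compat; lra). lra. }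
  apply Rle_trans with (y / (y + / (2 * y))).
  - assert (E: y / (y + / (2 * y)) = 1 - 1 / (2 * y ^ 2 + 1)) by (field; nra).
    rewrite E. apply Rplus_le_compat_l. apply Ropp_le_contravar.
    unfold Rdiv. rewrite Rmult_1_l. apply Rinv_le_contravar. lra. nra.
  - unfold Rdiv. apply Rmult_le_compat_l. lra. apply Rinv_le_contravar; auto.
Qed.

Lemma sin_approx1 a : sin_approx a 1 = a - a^3/6.
Proof. unfold sin_approx, sin_term. simpl. field. Qed.

Lemma dl_pos q : 1 <= q -> 0 < dl q <= / 16.
Proof. intro. unfold dl. split. apply Rinv_0_lt_compat; lra. apply Rinv_le_contravar; lra. Qed.

Lemma s2_lb q x : 1 <= q -> dl q <= x <= / 2 - dl q -> dl q <= s2 x.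
Proof.
  intros Hq Hx. pose proof (dl_pos q Hq) as Hd. set (d := dl q) in *.
  pose proof PI_4. pose proof PI2_3_2.
  set (y0 := 2 * PI * d).
  assert (Hy0: 6 * d <= y0 <= / 2) by (unfold y0; split; nra).
  assert (S0: d <= sin y0).
  { pose proof (sin_bound y0 0 ltac:(lra) ltac:(lra)) as [B _].
    replace (2 * 0 + 1)%nat with 1%nat in B by reflexivity. rewrite sin_approx1 in B.
    assert (y0 ^ 3 / 6 <= y0 / 24). { assert (y0^2 <= /4) by nra. nra. }
    lra. }
  unfold s2. set (y := 2 * PI * x).
  assert (Hy: y0 <= y <= PI - y0) by (unfold y, y0; split; nra).
  destruct (Rle_dec y (PI / 2)).
  - apply Rle_trans with (sin y0); auto. apply sin_incr_1; lra.
  - rewrite <- sin_PI_x. apply Rle_trans with (sin y0); auto. apply sin_incr_1; lra.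
Qed.

Lemma ww_lb q x : 1 <= q -> dl q <= x <= / 2 - dl q -> 1 - / (8 * q) <= Rabs (ww q x).
Proof.
  intros Hq Hx. pose proof (s2_lb q x Hq Hx). pose proof (dl_pos q Hq).
  assert (HK: KK q * dl q = 8 * q) by (unfold KK; field; lra).
  assert (HK0: 0 < KK q) by (unfold KK; apply Rdiv_lt_0_compat; lra).
  unfold ww. apply Rle_trans with (KK q * s2 x / sqrt (1 + (KK q * s2 x) ^ 2)); [|apply Rle_abs].
  apply frac_lb; auto. rewrite <- HK. apply Rmult_le_compat_l; lra.
Qed.

Lemma ww_lb2 q x : 1 <= q -> / 2 + dl q <= x <= 1 - dl q -> 1 - / (8 * q) <= Rabs (ww q x).
Proof.
  intros Hq Hx. replace x with ((x - / 2) + / 2) by ring. rewrite ww_half, Rabs_Ropp.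
  apply ww_lb; auto. lra.
Qed.

Lemma absw_int q : 1 <= q -> 1 - 3 / (8 * q) <= RInt (fun x => Rabs (ww q x)) 0 1.
Proof.
  intros Hq. pose proof (dl_pos q Hq) as Hd. set (d := dl q) in *.
  set (h := fun x => Rabs (ww q x)).
  assert (Hc: forall x, continuity_pt h x) by (intro; apply cont_abs; apply sm_cont, sm_ww).
  assert (Ex: forall a b, ex_RInt h a b) by (intros; apply exRInt_all; auto).
  set (c := 1 - / (8 * q)).
  assert (Pos: forall a b, a <= b -> 0 <= RInt h a b).
  { intros. apply RInt_ge_0; auto. intros; apply Rabs_pos. }
  assert (Mid: forall a b, a <= b -> (forall x, a <= x <= b -> c <= h x) -> (b - a) * c <= RInt h a b).
  { intros a b Hab Hx. rewrite <- RInt_const'. apply RInt_le; auto. apply (@ex_RInt_const R_CompleteNormedModule).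
    intros; apply Hx; lra. }
  assert (C: forall a b e, RInt h a b + RInt h b e = RInt h a e) by (intros; apply (@RInt_Chasles R_CompleteNormedModule); auto).
  rewrite <- (C 0 d 1), <- (C d (/2 - d) 1), <- (C (/2 - d) (/2 + d) 1), <- (C (/2 + d) (1 - d) 1).
  pose proof (Pos 0 d ltac:(lra)). pose proof (Pos (/2 - d) (/2 + d) ltac:(lra)). pose proof (Pos (1 - d) 1 ltac:(lra)).
  pose proof (Mid d (/2 - d) ltac:(lra) (fun x Hx => ww_lb q x Hq Hx)).
  pose proof (Mid (/2 + d) (1 - d) ltac:(lra) (fun x Hx => ww_lb2 q x Hq Hx)).
  assert (Hdq: d = / (16 * q)) by reflexivity.
  assert (E: (/ 2 - d - d) * c + (1 - d - (/ 2 + d)) * c = c * (1 - 4 * d)) by ring.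
  assert (c * (1 - 4 * d) >= 1 - 3 / (8 * q)).
  { unfold c. rewrite Hdq. 
    replace ((1 - / (8 * q)) * (1 - 4 * / (16 * q))) with (1 - 3 / (8 * q) + / (32 * q * q)) by (field; lra).
    assert (0 < / (32 * q * q)) by (apply Rinv_0_lt_compat; nra). lra. }
  lra.
Qed.

Definition II q := RInt (fun x => rpow (uu q x) q) 0 1.
Definition AA q := rpow (II q) (/ q).
Definition ff q x := q / AA q * uu q x.
Definition gg q x := q / AA q * vv q x.

Section Pair.
Variable qv : R.
Hypothesis Hq : 1 <= qv.

Lemma sm_uu : smooth (uu qv).
Proof. unfold uu. apply sm_ext with (fun x => / 2 * (1 + ww qv x)). intro; cbv beta; field.
  apply sm_scal. apply sm_plus. apply sm_const. apply sm_ww. Qed.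
Lemma sm_vv : smooth (vv qv).
Proof. unfold vv. apply sm_ext with (fun x => / 2 * (1 - ww qv x)). intro; cbv beta; field.
  apply sm_scal. apply sm_minus. apply sm_const. apply sm_ww. Qed.

Lemma uu_range x : 0 < uu qv x < 1.
Proof. unfold uu. pose proof (ww_lt1 qv x). apply Rabs_def2 in H. lra. Qed.
Lemma vv_range x : 0 < vv qv x < 1.
Proof. unfold vv. pose proof (ww_lt1 qv x). apply Rabs_def2 in H. lra. Qed.
Lemma uu_per x : uu qv (x + 1) = uu qv x.
Proof. unfold uu. rewrite ww_per. auto. Qed.
Lemma vv_shift x : vv qv x = uu qv (x + / 2).
Proof. unfold vv, uu. rewrite ww_half. lra. Qed.
Lemma ww_int : RInt (ww qv) 0 1 = 0.
Proof.
  pose proof (shift_int (ww qv) (/ 2) (fun x => sm_cont _ (sm_ww qv) x) (ww_per qv)) as E.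
  rewrite (RInt_ext' (fun x => ww qv (x + / 2)) (fun x => -1 * ww qv x)) in E by (intro; rewrite ww_half; ring).
  rewrite RInt_scal' in E. lra. apply sm_exRInt, sm_ww.
Qed.

Lemma uu_int : RInt (uu qv) 0 1 = / 2.
Proof.
  rewrite (RInt_ext' _ (fun x => / 2 + / 2 * ww qv x)) by (intro; unfold uu; field).
  assert (E: RInt (fun x => / 2 + / 2 * ww qv x) 0 1 = RInt (fun _ => / 2) 0 1 + RInt (fun x => / 2 * ww qv x) 0 1).
  { apply (@RInt_plus R_CompleteNormedModule). apply (@ex_RInt_const R_CompleteNormedModule).
    apply (@ex_RInt_scal R_CompleteNormedModule). apply sm_exRInt, sm_ww. }
  rewrite E, RInt_const', RInt_scal', ww_int. change ((1 - 0) * / 2 + / 2 * 0 = / 2 :> R). field. apply sm_exRInt, sm_ww.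
Qed.

Lemma rpow_le_self y : 0 < y <= 1 -> rpow y qv <= y.
Proof.
  intro Hy. rewrite rpow_pos by lra. unfold Rpower. rewrite <- (exp_ln y) at 2 by lra. apply exp_le.
  destruct Hy as [H0 [H1|H1]]. pose proof (ln_increasing y 1 H0 H1). rewrite ln_1 in *. nra.
  subst. rewrite ln_1. lra.
Qed.

Lemma uuq_cont x : continuity_pt (fun x => rpow (uu qv x) qv) x.
Proof. apply cont_rpow. lra. apply sm_cont, sm_uu. Qed.

Lemma II_le : II qv <= / 2.
Proof.
  rewrite <- uu_int. apply RInt_le. lra. apply exRInt_all, uuq_cont. apply sm_exRInt, sm_uu.
  intros; apply rpow_le_self. pose proof (uu_range x); lra.
Qed.

Lemma AA_ge : / 2 <= AA qv.
Proof.
  rewrite <- uu_int. unfold AA, II.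
  rewrite (RInt_ext' (uu qv) (fun x => Rabs (uu qv x))) by (intro; rewrite Rabs_pos_eq; auto; left; apply uu_range).
  rewrite (RInt_ext' (fun x => rpow (uu qv x) qv) (fun x => rpow (Rabs (uu qv x)) qv)) by (intro; rewrite Rabs_pos_eq; auto; left; apply uu_range).
  apply jensen; auto. apply sm_cont, sm_uu.
Qed.

Lemma AA_le : AA qv <= Rpower (/ 2) (/ qv).
Proof. unfold AA. rewrite <- rpow_pos by lra. apply rpow_mono. apply Rinv_0_lt_compat; lra. apply II_le. Qed.

Lemma II_pos : 0 < II qv.
Proof.
  destruct (Rlt_dec 0 (II qv)); auto. pose proof AA_ge. unfold AA in H. rewrite rpow_le0 in H by lra. lra.
Qed.

Lemma II_v : RInt (fun x => rpow (vv qv x) qv) 0 1 = II qv.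
Proof.
  unfold II. transitivity (RInt (fun x => (fun y => rpow (uu qv y) qv) (x + / 2)) 0 1).
  apply RInt_ext'. intro x. cbv beta. rewrite vv_shift. reflexivity.
  apply (shift_int (fun y => rpow (uu qv y) qv)). apply uuq_cont. intro; rewrite uu_per; auto.
Qed.

Lemma scaled_Uq (u : R -> R) : smooth u -> (forall x, u (x + 1) = u x) -> (forall x, 0 < u x) ->
  RInt (fun x => rpow (u x) qv) 0 1 = II qv -> Uq qv (fun x => qv / AA qv * u x).
Proof.
  intros Su Pu Hu Iu. pose proof AA_ge as HA. set (c := qv / AA qv).
  assert (Hc: 0 < c) by (unfold c; apply Rdiv_lt_0_compat; lra).
  split; [split|split].
  - apply sm_scal; auto.
  - intro; rewrite Pu; auto.
  - intro; apply Rmult_lt_0_compat; auto.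
  - unfold Lqnorm.
    assert (E: forall x, rpow (Rabs (c * u x)) qv = Rpower c qv * rpow (u x) qv).
    { intro x. rewrite Rabs_pos_eq by (apply Rmult_le_pos; left; auto).
      rewrite rpow_mult by (try lra; left; auto). rewrite rpow_pos; auto. }
    rewrite (functional_extensionality _ _ E). rewrite int01_RInt. rewrite RInt_scal', Iu.
    rewrite rpow_mult by (try apply Rinv_0_lt_compat; try lra; try (left; apply Rpower_pos); left; apply II_pos).
    rewrite rpow_pos by apply Rpower_pos. rewrite Rpower_inv by lra. fold (AA qv). unfold c. field. lra.
    apply exRInt_all. intro; apply cont_rpow. lra. apply sm_cont; auto.
    apply exRInt_all. intro; apply cont_mult. apply cont_const. apply cont_rpow. lra. apply sm_cont; auto.
Qed.

Lemma ff_Uq : Uq qv (ff qv).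
Proof.
  apply scaled_Uq. apply sm_uu. apply uu_per. intro; apply uu_range. reflexivity.
Qed.
Lemma gg_Uq : Uq qv (gg qv).
Proof.
  apply scaled_Uq. apply sm_vv. intro; rewrite !vv_shift. replace (x + 1 + / 2) with ((x + / 2) + 1) by ring.
  apply uu_per. intro; apply vv_range. apply II_v.
Qed.

Lemma pair_gap : qv < RInt (fun x => Rabs (gg qv x - ff qv x)) 0 1.
Proof.
  pose proof AA_ge as HA.
  rewrite (RInt_ext' _ (fun x => qv / AA qv * Rabs (ww qv x))).
  2: { intro x. unfold gg, ff, vv, uu.
       replace (qv / AA qv * ((1 - ww qv x) / 2) - qv / AA qv * ((1 + ww qv x) / 2)) with (- (qv / AA qv) * ww qv x) by (field; lra).
       rewrite Rabs_mult, Rabs_Ropp, Rabs_pos_eq; auto. apply Rlt_le, Rdiv_lt_0_compat; lra. }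
  rewrite RInt_scal'. 2: apply exRInt_all; intro; apply cont_abs, sm_cont, sm_ww.
  pose proof (absw_int qv Hq).
  set (y0 := 1 - 3 / (8 * qv)).
  assert (Hy0: 5 / 8 <= y0 < 1).
  { assert (Hi: 0 < / qv <= 1) by (split; [apply Rinv_0_lt_compat; lra| rewrite <- Rinv_1; apply Rinv_le_contravar; lra]).
    unfold y0. replace (3 / (8 * qv)) with (3 / 8 * / qv) by (field; lra). lra. }
  assert (B: 5 / 8 <= Rpower y0 qv).
  { pose proof (bern 1 y0 qv Hq ltac:(lra) ltac:(lra)) as Bn.
    assert (E1: forall z, Rpower 1 z = 1) by (intro; unfold Rpower; rewrite ln_1, Rmult_0_r, exp_0; auto).
    rewrite !E1, rpow_pos in Bn by lra.
    unfold y0 in Bn at 1. replace (1 + qv * 1 * (1 - 3 / (8 * qv) - 1)) with (5 / 8) in Bn by (field; lra). auto. }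
  assert (C: Rpower (/ 2) (/ qv) < y0).
  { rewrite <- (Rpower_inv y0 qv) by lra. apply Rlt_Rpower_l. apply Rinv_0_lt_compat; lra. lra. }
  pose proof AA_le.
  assert (AA qv < RInt (fun x => Rabs (ww qv x)) 0 1) by (unfold y0 in *; lra).
  apply Rle_lt_trans with (qv / AA qv * AA qv). right; field; lra.
  apply Rmult_lt_compat_l. apply Rdiv_lt_0_compat; lra. auto.
Qed.

End Pair.

Lemma glb_exists (E : R -> Prop) : (exists x, E x) -> (forall x, E x -> 0 <= x) -> exists m, is_glb E m.
Proof.
  intros [x0 Hx0] Hb.
  destruct (completeness (fun y => E (- y))) as [m [Hm1 Hm2]].
  - exists 0. intros y Hy. apply Hb in Hy. lra.
  - exists (- x0). rewrite Ropp_involutive; auto.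
  - exists (- m). split.
    + intros x Hx. assert (- x <= m) by (apply Hm1; rewrite Ropp_involutive; auto). lra.
    + intros b Hb'. assert (m <= - b). { apply Hm2. intros y Hy. apply Hb' in Hy. lra. } lra.
Qed.

Lemma length_facts q f g F : 1 <= q -> Uq_path q f g F ->
  0 <= path_length q F /\ RInt (fun x => Rabs (g x - f x)) 0 1 <= path_length q F.
Proof.
  intros Hq HP. destruct (path_basic q f g F Hq HP) as [L [Lc [L0 [E B]]]].
  split; auto. rewrite E. apply RInt_ge_0. lra. apply exRInt_all; auto. intros; auto.
Qed.

Lemma dist_facts q f g : 1 <= q -> Uq q f -> Uq q g ->
  (exists d, intrinsic_dist q f g d) /\
  (forall d, intrinsic_dist q f g d -> RInt (fun x => Rabs (g x - f x)) 0 1 <= d /\ d <= 4 * q).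
Proof.
  intros Hq Hf Hg.
  assert (Ex: path_lengths q f g (path_length q (Fp q f g))).
  { exists (Fp q f g). split; auto. apply Fp_path; auto. }
  assert (Len: path_length q (Fp q f g) <= 4 * q).
  { rewrite Fp_length by auto. apply length_bound; auto. }
  split.
  - apply glb_exists. eexists; eauto. intros l [F [HP E]]. subst l. apply (length_facts q f g F Hq HP).
  - intros d [Hd1 Hd2]. split.
    + apply Hd2. intros l [F [HP E]]. subst l. apply (length_facts q f g F Hq HP).
    + apply Rle_trans with (path_length q (Fp q f g)); auto.
Qed.

Lemma part3 q : 1 <= q -> exists D, is_diam_Uq q D /\ q < D <= 8 * q.
Proof.
  intros Hq.
  set (S := fun d => exists f g, Uq q f /\ Uq q g /\ intrinsic_dist q f g d).
  destruct (dist_facts q (ff q) (gg q) Hq (ff_Uq q Hq) (gg_Uq q Hq)) as [[d0 Hd0] Hd0'].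
  destruct (completeness S) as [D [HD1 HD2]].
  - exists (4 * q). intros d [f [g [Hf [Hg Hd]]]]. apply (dist_facts q f g Hq Hf Hg); auto.
  - exists d0. exists (ff q), (gg q). split. apply ff_Uq; auto. split. apply gg_Uq; auto. auto.
  - exists D. split. split.
    + intros f g Hf Hg. apply (dist_facts q f g Hq Hf Hg).
    + split; auto.
    + split.
      * apply Rlt_le_trans with d0. 
        apply Rlt_le_trans with (RInt (fun x => Rabs (gg q x - ff q x)) 0 1). apply pair_gap; auto.
        apply (Hd0' d0 Hd0).
        apply HD1. exists (ff q), (gg q). split. apply ff_Uq; auto. split. apply gg_Uq; auto. auto.
      * apply Rle_trans with (4 * q). apply HD2. intros d [f [g [Hf [Hg Hd]]]]. apply (dist_facts q f g Hq Hf Hg); auto. lra.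
Qed.

Theorem lemma3p3 (q : R) (hq : 1 <= q) :
  (forall phi h, DiffS1_0 phi -> tangent h ->
     (forall x, exists l,
        derivable_pt_lim (fun e => Phi q (fun y => phi y + e * h y) x) 0 l) /\
     Lqnorm q (dPhi q phi h) = Fmetric q phi h) /\
  (forall f, (exists phi, DiffS1_0 phi /\ forall x, Phi q phi x = f x) <-> Uq q f) /\
  (exists D, is_diam_Uq q D /\ q < D <= 8 * q).
Proof.
  split. intros phi h H1 H2. apply part1; auto.
  split. intro f. split. intros [phi [H1 H2]]. apply (part2_fwd q phi f); auto. apply part2_bwd; auto.
  apply part3; auto.
Qed.
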